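(* Let $d\in\{2,3\}$, $r>\frac{d+1}{2}$, $\beta>0$, and let $\mathbf u\in H_{\mathbb C}$ with $\|A^{1/4}\mathbf u\|_\beta<\infty$. Then $$|\langle B(\mathbf u,\mathbf u),A^{r}e^{2\beta A^{1/2}}\mathbf u\rangle|\le C\,2^r C_W(r)\,\|\mathbf u\|_\beta\,\|A^{1/4}\mathbf u\|_\beta^2,$$ where $C>0$ depends only on $d$.
   Context: Periodic domain $\Omega=[0,2\pi]^d$, $H$ = real mean-zero divergence-free $L^2$ vector fields, $H_{\mathbb C}=H+iH$ with sesquilinear $L^2$ inner product $\langle\cdot,\cdot\rangle$. $A=-\Delta$, acting by multiplication by $|\mathbf k|^2$ on Fourier coefficients; $A^s$ and $e^{\beta A^{1/2}}$ act by $|\mathbf k|^{2s}$ and $e^{\beta|\mathbf k|}$. $\|\mathbf f\|_\beta=\|A^{r/2}e^{\beta A^{1/2}}\mathbf f\|$. $B(\mathbf u,\mathbf v)=\mathbb P(\mathbf u\cdot\nabla\mathbf v)$ with $\mathbb P$ the Leray–Helmholtz projection, extended complex-bilinearly. $C_W(r)=\frac{1}{\pi 2^{d-1}}\frac{2r-d}{2r-1-d}$. *)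

(* Defs.v *)
(* classical reals. Fourier-side model of H_C on the torus [0,2pi]^d. *)
From Stdlib Require Import Reals Lra ZArith List ClassicalEpsilon.
Import ListNotations.
Open Scope R_scope.

Record Cx := mkCx { Re : R; Im : R }.
Definition C0 : Cx := mkCx 0 0.
Definition Ci : Cx := mkCx 0 1.
Definition CR (x : R) : Cx := mkCx x 0.
Definition Cadd (a b : Cx) : Cx := mkCx (Re a + Re b) (Im a + Im b).
Definition Copp (a : Cx) : Cx := mkCx (- Re a) (- Im a).
Definition Cmul (a b : Cx) : Cx :=
  mkCx (Re a * Re b - Im a * Im b) (Re a * Im b + Im a * Re b).
Definition Cconj (a : Cx) : Cx := mkCx (Re a) (- Im a).
Definition Cmod2 (a : Cx) : R := Re a * Re a + Im a * Im a.
Definition Cmod (a : Cx) : R := sqrt (Cmod2 a).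

(** Wavevectors k in Z^d are lists of integers of length d. *)
Definition wave := list Z.
Definition kcomp (k : wave) (i : nat) : R := IZR (nth i k 0%Z).
Definition ksub (k j : wave) : wave := map (fun p => (fst p - snd p)%Z) (combine k j).
Definition sumn (d : nat) (f : nat -> R) : R := fold_right Rplus 0 (map f (seq 0 d)).
Definition Csumn (d : nat) (f : nat -> Cx) : Cx := fold_right Cadd C0 (map f (seq 0 d)).
Definition knorm2 (d : nat) (k : wave) : R := sumn d (fun i => kcomp k i * kcomp k i).

(** Complex d-vectors (components indexed by i < d) and vector fields given by
    their Fourier coefficients: u(x) = sum_k (u k) e^{i k.x}. *)
Definition cvec := nat -> Cx.
Definition field := wave -> cvec.
Definition dotC (d : nat) (a b : cvec) : Cx := Csumn d (fun i => Cmul (a i) (b i)).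
Definition cvnorm2 (d : nat) (a : cvec) : R := sumn d (fun i => Cmod2 (a i)).

Definition zrange (N : nat) : list Z :=
  map (fun n => (Z.of_nat n - Z.of_nat N)%Z) (seq 0 (2 * N + 1)).
Fixpoint box (d N : nat) : list wave :=
  match d with
  | O => [nil]
  | S d' => flat_map (fun z => map (cons z) (box d' N)) (zrange N)
  end.

Definition Cpsum (d : nat) (f : wave -> Cx) (N : nat) : Cx :=
  fold_right Cadd C0 (map f (box d N)).
Definition Cconv (d : nat) (f : wave -> Cx) (L : Cx) : Prop :=
  Un_cv (fun N => Re (Cpsum d f N)) (Re L) /\ Un_cv (fun N => Im (Cpsum d f N)) (Im L).
Definition Chas_sum (d : nat) (f : wave -> Cx) : Prop := exists L, Cconv d f L.
Definition Csum (d : nat) (f : wave -> Cx) : Cx :=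
  epsilon (inhabits C0) (fun L => Cconv d f L).

Definition Rpsum (d : nat) (f : wave -> R) (N : nat) : R :=
  fold_right Rplus 0 (map f (box d N)).
Definition Rconv (d : nat) (f : wave -> R) (L : R) : Prop := Un_cv (Rpsum d f) L.
Definition Rhas_sum (d : nat) (f : wave -> R) : Prop := exists L, Rconv d f L.
Definition Rsum (d : nat) (f : wave -> R) : R :=
  epsilon (inhabits 0) (fun L => Rconv d f L).

(** H_C: mean-zero, divergence-free, square-summable complex fields. *)
Definition in_HC (d : nat) (u : field) : Prop :=
  (forall m, (m < d)%nat -> u (repeat 0%Z d) m = C0) /\
  (forall k, length k = d -> dotC d (fun i => CR (kcomp k i)) (u k) = C0) /\
  Rhas_sum d (fun k => cvnorm2 d (u k)).

(** The L^2 inner product <f,g> = int f . conj g = (2 pi)^d sum_k f_k . conj g_k. *)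
Definition l2inner (d : nat) (f g : field) : Cx :=
  Cmul (CR ((2 * PI) ^ d))
       (Csum d (fun k => Csumn d (fun m => Cmul (f k m) (Cconj (g k m))))).

(** Fourier multiplier |k|^{2s} e^{t |k|}, i.e. the symbol of A^s e^{t A^{1/2}}. *)
Definition symb (d : nat) (s t : R) (k : wave) : R :=
  Rpower (knorm2 d k) s * exp (t * sqrt (knorm2 d k)).

(** ||A^{a} f||_beta^2 = ||A^{r/2 + a} e^{beta A^{1/2}} f||^2 *)
Definition gnorm2 (d : nat) (r beta a : R) (f : field) : R :=
  (2 * PI) ^ d * Rsum d (fun k => symb d (r + 2 * a) (2 * beta) k * cvnorm2 d (f k)).
Definition gnorm (d : nat) (r beta a : R) (f : field) : R := sqrt (gnorm2 d r beta a f).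

(** Fourier coefficient (u . grad v)^(k), component m:
    sum_j (u_{k-j} . (i j)) v_j,m *)
Definition conv_term (d : nat) (u v : field) (k : wave) (m : nat) (j : wave) : Cx :=
  Cmul (Cmul Ci (dotC d (u (ksub k j)) (fun i => CR (kcomp j i)))) (v j m).
Definition adv (d : nat) (u v : field) : field :=
  fun k m => Csum d (conv_term d u v k m).

(** Leray--Helmholtz projection: w_k - (k.w_k) k/|k|^2 for k <> 0, and 0 at k = 0. *)
Definition leray (d : nat) (w : field) : field :=
  fun k m =>
    if Req_EM_T (knorm2 d k) 0 then C0
    else Cadd (w k m)
              (Copp (Cmul (CR (kcomp k m / knorm2 d k))
                          (dotC d (fun i => CR (kcomp k i)) (w k)))).

Definition Bop (d : nat) (u v : field) : field := leray d (adv d u v).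

Definition Ar_exp (d : nat) (r beta : R) (f : field) : field :=
  fun k m => Cmul (CR (symb d r (2 * beta) k)) (f k m).

Definition CW (d : nat) (r : R) : R :=
  1 / (PI * 2 ^ (d - 1)) * ((2 * r - INR d) / (2 * r - 1 - INR d)).

(* Main.v *)
Require Import Defs.
From Stdlib Require Import Reals ZArith List.
From Stdlib Require Import Lra Lia ClassicalEpsilon FinFun.
Import ListNotations.
Open Scope R_scope.

Definition lsum {A} (f : A -> R) (l : list A) : R := fold_right Rplus 0 (map f l).

Lemma lsum_nil {A} (f : A -> R) : lsum f [] = 0.
Proof. reflexivity. Qed.
Lemma lsum_cons {A} (f : A -> R) a l : lsum f (a :: l) = f a + lsum f l.
Proof. reflexivity. Qed.
Lemma lsum_app {A} (f : A -> R) l1 l2 : lsum f (l1 ++ l2) = lsum f l1 + lsum f l2.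
Proof. induction l1; unfold lsum in *; simpl; [lra|]. rewrite IHl1; lra. Qed.
Lemma lsum_map {A B} (f : B -> R) (g : A -> B) l : lsum f (map g l) = lsum (fun x => f (g x)) l.
Proof. unfold lsum; rewrite map_map; reflexivity. Qed.
Lemma lsum_flat_map {A B} (f : B -> R) (g : A -> list B) l :
  lsum f (flat_map g l) = lsum (fun x => lsum f (g x)) l.
Proof. induction l; simpl; [reflexivity|]. rewrite lsum_app, lsum_cons, IHl; reflexivity. Qed.
Lemma lsum_le {A} (f g : A -> R) l : (forall x, In x l -> f x <= g x) -> lsum f l <= lsum g l.
Proof. induction l; intros H; simpl. unfold lsum; simpl; lra.
  rewrite !lsum_cons. assert (f a <= g a) by (apply H; left; auto).
  assert (lsum f l <= lsum g l) by (apply IHl; intros; apply H; right; auto). lra. Qed.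
Lemma lsum_ext {A} (f g : A -> R) l : (forall x, In x l -> f x = g x) -> lsum f l = lsum g l.
Proof. intros H; apply Rle_antisym; apply lsum_le; intros x Hx; rewrite (H x Hx); lra. Qed.
Lemma lsum_nonneg {A} (f : A -> R) l : (forall x, In x l -> 0 <= f x) -> 0 <= lsum f l.
Proof. intros H. replace 0 with (lsum (fun _ => 0) l). apply lsum_le; auto.
  induction l; auto. rewrite lsum_cons, IHl; [lra|]. intros; apply H; right; auto. Qed.
Lemma lsum_plus {A} (f g : A -> R) l : lsum (fun x => f x + g x) l = lsum f l + lsum g l.
Proof. induction l; simpl. unfold lsum; simpl; lra. rewrite !lsum_cons, IHl; lra. Qed.
Lemma lsum_scal {A} (c : R) (f : A -> R) l : lsum (fun x => c * f x) l = c * lsum f l.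
Proof. induction l; simpl. unfold lsum; simpl; lra. rewrite !lsum_cons, IHl; lra. Qed.
Lemma lsum_opp {A} (f : A -> R) l : lsum (fun x => - f x) l = - lsum f l.
Proof. induction l; simpl. unfold lsum; simpl; lra. rewrite !lsum_cons, IHl; lra. Qed.
Lemma lsum_const {A} (c : R) (l : list A) : lsum (fun _ => c) l = INR (length l) * c.
Proof. induction l; [unfold lsum; simpl; lra|]. rewrite lsum_cons, IHl. change (length (a::l)) with (S (length l)). rewrite S_INR; lra. Qed.
Lemma lsum_swap {A B} (F : A -> B -> R) l1 l2 :
  lsum (fun x => lsum (fun y => F x y) l2) l1 = lsum (fun y => lsum (fun x => F x y) l1) l2.
Proof. induction l1; simpl.
  - unfold lsum at 1; simpl. symmetry. replace 0 with (lsum (fun _:B => 0) l2).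
    apply lsum_ext; intros; reflexivity. rewrite lsum_const; lra.
  - rewrite lsum_cons, IHl1. rewrite <- lsum_plus. apply lsum_ext; intros. rewrite lsum_cons; reflexivity. Qed.
Lemma lsum_single_le {A} (f : A -> R) l x : (forall y, In y l -> 0 <= f y) -> In x l -> f x <= lsum f l.
Proof. induction l; intros H Hx; [destruct Hx|]. rewrite lsum_cons. destruct Hx as [<-|Hx].
  - assert (0 <= lsum f l) by (apply lsum_nonneg; intros; apply H; right; auto). lra.
  - assert (0 <= f a) by (apply H; left; auto). assert (f x <= lsum f l) by (apply IHl; auto; intros; apply H; right; auto). lra. Qed.

Lemma lsum_CS {A} (f g : A -> R) l :
  lsum (fun x => f x * g x) l <= sqrt (lsum (fun x => f x * f x) l) * sqrt (lsum (fun x => g x * g x) l).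
Proof.
  set (F := lsum (fun x => f x * f x) l). set (G := lsum (fun x => g x * g x) l).
  assert (HF : 0 <= F) by (apply lsum_nonneg; intros; nra).
  assert (HG : 0 <= G) by (apply lsum_nonneg; intros; nra).
  destruct (Req_dec F 0) as [F0|F0].
  - assert (Hf : forall x, In x l -> f x = 0).
    { intros x Hx. assert (f x * f x <= F) by (apply (lsum_single_le (fun x => f x * f x)); auto; intros; nra). nra. }
    rewrite (lsum_ext _ (fun _ => 0)). rewrite lsum_const. rewrite F0, sqrt_0. lra.
    intros x Hx; rewrite Hf by auto; ring.
  - destruct (Req_dec G 0) as [G0|G0].
    + assert (Hg : forall x, In x l -> g x = 0).
      { intros x Hx. assert (g x * g x <= G) by (apply (lsum_single_le (fun x => g x * g x)); auto; intros; nra). nra. }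
      rewrite (lsum_ext _ (fun _ => 0)). rewrite lsum_const. rewrite G0, sqrt_0. lra.
      intros x Hx; rewrite Hg by auto; ring.
    + set (a := sqrt F). set (b := sqrt G).
      assert (Ha : 0 < a) by (apply sqrt_lt_R0; destruct HF; [auto|exfalso; auto]). assert (Hb : 0 < b) by (apply sqrt_lt_R0; destruct HG; [auto|exfalso; auto]).
      assert (Haa : a * a = F) by (apply sqrt_sqrt; lra). assert (Hbb : b * b = G) by (apply sqrt_sqrt; lra).
      assert (H : lsum (fun x => f x * g x) l <= lsum (fun x => (b/a) * (f x * f x) / 2 + (a/b) * (g x * g x) / 2) l).
      { apply lsum_le; intros x _. 
        assert (0 <= (b * f x - a * g x) ^ 2) by apply pow2_ge_0.
        assert (E : (b/a) * (f x * f x) / 2 + (a/b) * (g x * g x) / 2 - f x * g x = (b * f x - a * g x) ^ 2 / (2 * a * b)) by (field; lra).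
        assert (0 <= (b * f x - a * g x) ^ 2 / (2 * a * b)) by (apply Rmult_le_pos; [lra| left; apply Rinv_0_lt_compat; nra]). lra. }
      rewrite lsum_plus in H.
      rewrite (lsum_ext (fun x => b / a * (f x * f x) / 2) (fun x => (b/a/2) * (f x * f x))) in H by (intros; lra).
      rewrite (lsum_ext (fun x => a / b * (g x * g x) / 2) (fun x => (a/b/2) * (g x * g x))) in H by (intros; lra).
      rewrite !lsum_scal in H. fold F G in H. rewrite <- Haa, <- Hbb in H.
      replace (b / a / 2 * (a * a) + a / b / 2 * (b * b)) with (a * b) in H by (field; lra). exact H.
Qed.


Lemma in_zrange z N : In z (zrange N) <-> (Z.abs z <= Z.of_nat N)%Z.
Proof. unfold zrange. rewrite in_map_iff. split.
  - intros [n [<- Hn]]. apply in_seq in Hn. lia.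
  - intros H. exists (Z.to_nat (z + Z.of_nat N)). split. lia. apply in_seq. lia. Qed.

Lemma in_box d N x : In x (box d N) <-> length x = d /\ Forall (fun z => (Z.abs z <= Z.of_nat N)%Z) x.
Proof. revert x; induction d; intros x; simpl.
  - split. intros [<-|[]]; split; auto. intros [H _]; destruct x; [left; auto| discriminate].
  - rewrite in_flat_map. split.
    + intros [z [Hz Hx]]. apply in_map_iff in Hx. destruct Hx as [t [<- Ht]].
      apply IHd in Ht. apply in_zrange in Hz. destruct Ht. split. simpl; auto. constructor; auto.
    + intros [Hl HF]. destruct x as [|z t]; [discriminate|]. inversion HF; subst.
      exists z. split. apply in_zrange; auto. apply in_map. apply IHd. split; auto. Qed.

Lemma NoDup_flat_map {A B} (F : A -> list B) l :
  NoDup l -> (forall a, NoDup (F a)) -> (forall a1 a2 x, In x (F a1) -> In x (F a2) -> a1 = a2) ->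
  NoDup (flat_map F l).
Proof. induction l; intros Hl HF Hd; simpl. constructor. inversion Hl; subst.
  apply NoDup_app; auto. intros x Hx Hx'. apply in_flat_map in Hx'. destruct Hx' as [b [Hb Hxb]].
  rewrite (Hd a b x Hx Hxb) in H1. contradiction. Qed.

Lemma NoDup_box d N : NoDup (box d N).
Proof. induction d; simpl. constructor; [intros []|constructor].
  apply NoDup_flat_map.
  - unfold zrange. apply Injective_map_NoDup. intros a b H. lia. apply seq_NoDup.
  - intros z. apply Injective_map_NoDup; auto. intros a b H; inversion H; auto.
  - intros z1 z2 x H1 H2. apply in_map_iff in H1, H2. destruct H1 as [t1 [<- _]]. destruct H2 as [t2 [H _]].
    inversion H; auto. Qed.

Lemma box_mono d N N' x : (N <= N')%nat -> In x (box d N) -> In x (box d N').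
Proof. intros HN H. apply in_box in H. apply in_box. destruct H as [H1 H2]; split; auto.
  eapply Forall_impl; [|exact H2]. intros a Ha; simpl in Ha. lia. Qed.

Lemma in_some_box d x : length x = d -> exists N, In x (box d N).
Proof. intros Hl. exists (fold_right (fun z m => Nat.max (Z.to_nat (Z.abs z)) m) 0%nat x).
  apply in_box. split; auto. clear Hl. induction x; constructor; simpl.
  - lia. - eapply Forall_impl; [|exact IHx]. intros z Hz. simpl in *. lia. Qed.

Lemma list_in_box d (l : list wave) : (forall x, In x l -> length x = d) -> exists N, incl l (box d N).
Proof. induction l; intros H. exists 0%nat. intros x []. 
  destruct IHl as [N1 H1]. intros; apply H; right; auto.
  destruct (in_some_box d a) as [N2 H2]. apply H; left; auto.
  exists (Nat.max N1 N2). intros x [<-|Hx]. eapply box_mono; [|eauto]; lia. eapply box_mono; [|apply H1; eauto]; lia. Qed.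

Lemma lsum_sub_le {A} (f : A -> R) l1 l2 :
  NoDup l1 -> incl l1 l2 -> (forall x, In x l2 -> 0 <= f x) -> lsum f l1 <= lsum f l2.
Proof. revert l2; induction l1 as [|a l1 IH]; intros l2 Hn Hi Hf.
  - rewrite lsum_nil. apply lsum_nonneg; auto.
  - inversion Hn; subst. assert (Ha : In a l2) by (apply Hi; left; auto).
    apply in_split in Ha. destruct Ha as [x [y ->]].
    rewrite lsum_cons, lsum_app, lsum_cons.
    assert (lsum f l1 <= lsum f (x ++ y)).
    { apply IH; auto. intros z Hz. assert (In z (x ++ a :: y)) by (apply Hi; right; auto).
      apply in_app_iff in H. apply in_app_iff. destruct H as [H|[H|H]]; auto. subst; contradiction.
      intros z Hz; apply Hf. apply in_app_iff in Hz; apply in_app_iff; simpl; tauto. }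
    rewrite lsum_app in H. lra. Qed.

Lemma Rpsum_mono d f N N' : (forall x, length x = d -> 0 <= f x) -> (N <= N')%nat -> Rpsum d f N <= Rpsum d f N'.
Proof. intros Hf HN. apply (lsum_sub_le f). apply NoDup_box. intros x Hx; eapply box_mono; eauto.
  intros x Hx; apply Hf; apply in_box in Hx; tauto. Qed.

Lemma lsum_inj_box d (f : wave -> R) (phi : wave -> wave) S N :
  (forall x, length x = d -> 0 <= f x) ->
  (forall M, Rpsum d f M <= S) ->
  (forall x, length x = d -> length (phi x) = d) ->
  (forall x y, length x = d -> length y = d -> phi x = phi y -> x = y) ->
  lsum (fun x => f (phi x)) (box d N) <= S.
Proof. intros Hf HS Hl Hi. rewrite <- lsum_map.
  destruct (list_in_box d (map phi (box d N))) as [M HM].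
  { intros x Hx. apply in_map_iff in Hx. destruct Hx as [y [<- Hy]]. apply Hl. apply in_box in Hy; tauto. }
  eapply Rle_trans; [|apply (HS M)]. apply lsum_sub_le; auto.
  - apply NoDup_map_NoDup_ForallPairs; [|apply NoDup_box].
    intros x y Hx Hy. apply Hi; [apply in_box in Hx; tauto|apply in_box in Hy; tauto].
  - intros x Hx; apply Hf; apply in_box in Hx; tauto. Qed.


Lemma Cx_ext a b : Re a = Re b -> Im a = Im b -> a = b.
Proof. destruct a, b; simpl; intros -> ->; reflexivity. Qed.
Lemma Cmod2_nonneg a : 0 <= Cmod2 a.
Proof. unfold Cmod2; nra. Qed.
Lemma Cmod_nonneg a : 0 <= Cmod a.
Proof. apply sqrt_pos. Qed.
Lemma Cmod_sq a : Cmod a * Cmod a = Cmod2 a.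
Proof. apply sqrt_sqrt, Cmod2_nonneg. Qed.
Lemma Cmod_mul a b : Cmod (Cmul a b) = Cmod a * Cmod b.
Proof. unfold Cmod. rewrite <- sqrt_mult by apply Cmod2_nonneg. f_equal. unfold Cmod2, Cmul; simpl; ring. Qed.
Lemma Cmod_CR x : Cmod (CR x) = Rabs x.
Proof. unfold Cmod, Cmod2, CR; simpl. replace (x * x + 0 * 0) with (Rsqr x) by (unfold Rsqr; ring). apply sqrt_Rsqr_abs. Qed.
Lemma Cmod_conj a : Cmod (Cconj a) = Cmod a.
Proof. unfold Cmod, Cmod2, Cconj; simpl. f_equal; ring. Qed.
Lemma Cmod_Ci : Cmod Ci = 1.
Proof. unfold Cmod, Cmod2, Ci; simpl. replace (0*0+1*1) with 1 by ring. apply sqrt_1. Qed.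
Lemma Cmod_C0 : Cmod C0 = 0.
Proof. unfold Cmod, Cmod2, C0; simpl. replace (0*0+0*0) with 0 by ring. apply sqrt_0. Qed.
Lemma Cmod_le_iff z M : 0 <= M -> Cmod2 z <= M * M -> Cmod z <= M.
Proof. intros HM H. unfold Cmod. rewrite <- (sqrt_square M) by auto. apply sqrt_le_1; auto. apply Cmod2_nonneg. apply Rmult_le_pos; auto. Qed.
Lemma Re_le_Cmod z : Rabs (Re z) <= Cmod z.
Proof. unfold Cmod, Cmod2. rewrite <- sqrt_Rsqr_abs. apply sqrt_le_1_alt. unfold Rsqr; nra. Qed.
Lemma Im_le_Cmod z : Rabs (Im z) <= Cmod z.
Proof. unfold Cmod, Cmod2. rewrite <- sqrt_Rsqr_abs. apply sqrt_le_1_alt. unfold Rsqr; nra. Qed.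
Lemma Cmod_add a b : Cmod (Cadd a b) <= Cmod a + Cmod b.
Proof. apply Cmod_le_iff. pose proof (Cmod_nonneg a); pose proof (Cmod_nonneg b); lra.
  assert (H : Re a * Re b + Im a * Im b <= Cmod a * Cmod b).
  { unfold Cmod. rewrite <- sqrt_mult by apply Cmod2_nonneg.
    apply Rle_trans with (Rabs (Re a * Re b + Im a * Im b)). apply Rle_abs.
    rewrite <- sqrt_Rsqr_abs. apply sqrt_le_1_alt. unfold Rsqr, Cmod2.
    assert (0 <= (Re a * Im b - Im a * Re b)^2) by apply pow2_ge_0. nra. }
  pose proof (Cmod_sq a); pose proof (Cmod_sq b). unfold Cmod2, Cadd in *; simpl in *. nra. Qed.

Definition Clsum {A} (f : A -> Cx) (l : list A) : Cx := fold_right Cadd C0 (map f l).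
Lemma Re_Clsum {A} (f : A -> Cx) l : Re (Clsum f l) = lsum (fun x => Re (f x)) l.
Proof. induction l; simpl. reflexivity. rewrite lsum_cons, <- IHl. reflexivity. Qed.
Lemma Im_Clsum {A} (f : A -> Cx) l : Im (Clsum f l) = lsum (fun x => Im (f x)) l.
Proof. induction l; simpl. reflexivity. rewrite lsum_cons, <- IHl. reflexivity. Qed.
Lemma Cmod_Clsum {A} (f : A -> Cx) l : Cmod (Clsum f l) <= lsum (fun x => Cmod (f x)) l.
Proof. induction l. unfold Clsum, lsum; simpl. rewrite Cmod_C0; lra.
  rewrite lsum_cons. unfold Clsum; simpl. eapply Rle_trans. apply Cmod_add. unfold Clsum in IHl. lra. Qed.

Lemma Rsum_spec d f L : Rconv d f L -> Rsum d f = L.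
Proof. intros H. unfold Rsum. apply (UL_sequence (Rpsum d f)); auto.
  apply (epsilon_spec (inhabits 0) (fun L => Rconv d f L)). exists L; auto. Qed.

Lemma Rpsum_growing d f : (forall x, length x = d -> 0 <= f x) -> Un_growing (Rpsum d f).
Proof. intros Hf n. apply Rpsum_mono; auto. Qed.

Lemma nonneg_has_sum d f : (forall x, length x = d -> 0 <= f x) -> Rhas_sum d f ->
  Rconv d f (Rsum d f) /\ (forall N, Rpsum d f N <= Rsum d f).
Proof. intros Hf [L HL]. rewrite (Rsum_spec d f L HL). split; auto.
  apply growing_ineq; auto. apply Rpsum_growing; auto. Qed.

Lemma nonneg_bounded d f M : (forall x, length x = d -> 0 <= f x) -> (forall N, Rpsum d f N <= M) ->
  Rconv d f (Rsum d f) /\ (forall N, Rpsum d f N <= Rsum d f) /\ Rsum d f <= M.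
Proof. intros Hf HM.
  destruct (growing_cv (Rpsum d f)) as [L HL]. apply Rpsum_growing; auto. exists M; intros x [n ->]; auto.
  assert (Hs : Rhas_sum d f) by (exists L; auto).
  destruct (nonneg_has_sum d f Hf Hs) as [H1 H2]. split; auto. split; auto.
  eapply Rle_cv_lim; [exact HM|exact H1|]. intros e He; exists 0%nat; intros; unfold R_dist; rewrite Rminus_diag, Rabs_R0; auto. Qed.

Lemma Rpsum_Re d f N : Re (Cpsum d f N) = Rpsum d (fun x => Re (f x)) N.
Proof. apply (Re_Clsum f). Qed.
Lemma Rpsum_Im d f N : Im (Cpsum d f N) = Rpsum d (fun x => Im (f x)) N.
Proof. apply (Im_Clsum f). Qed.

Lemma real_abs_conv d (f g : wave -> R) M : (forall x, length x = d -> Rabs (f x) <= g x) ->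
  (forall N, Rpsum d g N <= M) -> exists L, Un_cv (Rpsum d f) L.
Proof. intros Hfg HM.
  assert (Hg : forall x, length x = d -> 0 <= g x) by (intros x Hx; specialize (Hfg x Hx); pose proof (Rabs_pos (f x)); lra).
  set (fp := fun x => (Rabs (f x) + f x) / 2). set (fm := fun x => (Rabs (f x) - f x) / 2).
  assert (Hb : forall h, (forall x, length x = d -> 0 <= h x <= g x) -> Rhas_sum d h).
  { intros h Hh. destruct (nonneg_bounded d h M) as [H1 _]. intros; apply Hh; auto.
    intros N. eapply Rle_trans; [|apply (HM N)]. apply lsum_le. intros x Hx; apply Hh; apply in_box in Hx; tauto.
    exists (Rsum d h); auto. }
  destruct (Hb fp) as [Lp Hp]. intros x Hx; specialize (Hfg x Hx); unfold fp; split; [pose proof (Rle_abs (- f x)); rewrite Rabs_Ropp in *; lra| pose proof (Rle_abs (f x)); lra].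
  destruct (Hb fm) as [Lm Hm]. intros x Hx; specialize (Hfg x Hx); unfold fm; split; [pose proof (Rle_abs (f x)); lra| pose proof (Rle_abs (- f x)); rewrite Rabs_Ropp in *; lra].
  exists (Lp - Lm). unfold Rconv in *. 
  apply (Un_cv_ext (fun N => Rpsum d fp N - Rpsum d fm N)).
  intros N. change (lsum fp (box d N) - lsum fm (box d N) = lsum f (box d N)).
  unfold Rminus. rewrite <- lsum_opp, <- lsum_plus. apply lsum_ext; intros; unfold fp, fm; lra.
  apply CV_minus; auto. Qed.

Lemma Cpsum_Cmod d f N : Cmod (Cpsum d f N) <= Rpsum d (fun x => Cmod (f x)) N.
Proof. apply (Cmod_Clsum f). Qed.

Lemma cplx_abs_conv d (f : wave -> Cx) (g : wave -> R) M :
  (forall x, length x = d -> Cmod (f x) <= g x) -> (forall N, Rpsum d g N <= M) ->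
  Chas_sum d f /\ Cconv d f (Csum d f) /\ Cmod (Csum d f) <= M.
Proof. intros Hfg HM.
  destruct (real_abs_conv d (fun x => Re (f x)) g M) as [Lr Hr]; auto.
  intros x Hx; eapply Rle_trans; [apply Re_le_Cmod|auto].
  destruct (real_abs_conv d (fun x => Im (f x)) g M) as [Li Hi]; auto.
  intros x Hx; eapply Rle_trans; [apply Im_le_Cmod|auto].
  assert (Hc : Cconv d f (mkCx Lr Li)).
  { split; simpl; eapply Un_cv_ext; [| exact Hr| |exact Hi]; intros n; symmetry; [apply Rpsum_Re|apply Rpsum_Im]. }
  assert (Hs : Chas_sum d f) by (exists (mkCx Lr Li); auto).
  assert (Hc' : Cconv d f (Csum d f)) by (unfold Csum; apply (epsilon_spec (inhabits C0) (fun L => Cconv d f L)); auto).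
  split; auto. split; auto.
  assert (Hg : forall x, length x = d -> 0 <= g x) by (intros x Hx; specialize (Hfg x Hx); pose proof (Cmod_nonneg (f x)); lra).
  assert (HM0 : 0 <= M). { eapply Rle_trans; [|apply (HM 0%nat)]. apply lsum_nonneg. intros x Hx; apply Hg. apply in_box in Hx; tauto. }
  apply Cmod_le_iff; auto. destruct Hc' as [H1 H2].
  assert (Hlim : Un_cv (fun N => Re (Cpsum d f N) * Re (Cpsum d f N) + Im (Cpsum d f N) * Im (Cpsum d f N)) (Cmod2 (Csum d f))).
  { unfold Cmod2. apply CV_plus; apply CV_mult; auto. }
  eapply Rle_cv_lim; [|exact Hlim|]. 2: { intros e He; exists 0%nat; intros; unfold R_dist; rewrite Rminus_diag, Rabs_R0; exact He. }
  intros N. simpl. fold (Cmod2 (Cpsum d f N)). rewrite <- Cmod_sq.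
  assert (Cmod (Cpsum d f N) <= M).
  { eapply Rle_trans; [apply Cpsum_Cmod|]. eapply Rle_trans; [|apply (HM N)]. apply lsum_le. intros x Hx; apply Hfg. apply in_box in Hx; tauto. }
  pose proof (Cmod_nonneg (Cpsum d f N)). nra. Qed.

Lemma lsum_cv {A} (F : A -> nat -> R) (L : A -> R) l :
  (forall x, In x l -> Un_cv (F x) (L x)) -> Un_cv (fun n => lsum (fun x => F x n) l) (lsum L l).
Proof. induction l; intros H.
  - intros e He; exists 0%nat; intros; unfold R_dist; rewrite lsum_nil, lsum_nil, Rminus_diag, Rabs_R0; auto.
  - rewrite lsum_cons. eapply Un_cv_ext; [|apply CV_plus; [apply (H a); left; auto| apply IHl; intros; apply H; right; auto]].
    intros n; simpl. rewrite lsum_cons. reflexivity. Qed.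


Definition vnorm (d : nat) (x : nat -> R) : R := sqrt (sumn d (fun i => x i * x i)).
Lemma sumn_lsum d f : sumn d f = lsum f (seq 0 d).
Proof. reflexivity. Qed.
Lemma sumn_ext d f g : (forall i, (i < d)%nat -> f i = g i) -> sumn d f = sumn d g.
Proof. intros H. rewrite !sumn_lsum. apply lsum_ext. intros i Hi; apply in_seq in Hi; apply H; lia. Qed.
Lemma sumn_le d f g : (forall i, (i < d)%nat -> f i <= g i) -> sumn d f <= sumn d g.
Proof. intros H. rewrite !sumn_lsum. apply lsum_le. intros i Hi; apply in_seq in Hi; apply H; lia. Qed.
Lemma sumn_nonneg d f : (forall i, (i < d)%nat -> 0 <= f i) -> 0 <= sumn d f.
Proof. intros H. rewrite !sumn_lsum. apply lsum_nonneg. intros i Hi; apply in_seq in Hi; apply H; lia. Qed.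
Lemma sumn_single d f i : (forall i, (i < d)%nat -> 0 <= f i) -> (i < d)%nat -> f i <= sumn d f.
Proof. intros H Hi. rewrite sumn_lsum. apply lsum_single_le. intros j Hj; apply in_seq in Hj; apply H; lia. apply in_seq; lia. Qed.
Lemma sumn_const d c : sumn d (fun _ => c) = INR d * c.
Proof. rewrite sumn_lsum, lsum_const, length_seq; reflexivity. Qed.

Lemma vnorm_nonneg d x : 0 <= vnorm d x.
Proof. apply sqrt_pos. Qed.
Lemma vnorm_sq d x : vnorm d x * vnorm d x = sumn d (fun i => x i * x i).
Proof. apply sqrt_sqrt. apply sumn_nonneg; intros; nra. Qed.
Lemma vnorm_ext d x y : (forall i, (i < d)%nat -> x i = y i) -> vnorm d x = vnorm d y.
Proof. intros H; unfold vnorm; f_equal; apply sumn_ext; intros; rewrite H; auto. Qed.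
Lemma vnorm_opp d x : vnorm d (fun i => - x i) = vnorm d x.
Proof. unfold vnorm; f_equal; apply sumn_ext; intros; ring. Qed.
Lemma vnorm_add d x y : vnorm d (fun i => x i + y i) <= vnorm d x + vnorm d y.
Proof.
  assert (CS : sumn d (fun i => x i * y i) <= vnorm d x * vnorm d y) by apply lsum_CS.
  pose proof (vnorm_sq d x); pose proof (vnorm_sq d y); pose proof (vnorm_nonneg d x); pose proof (vnorm_nonneg d y).
  unfold vnorm at 1. rewrite <- (sqrt_square (vnorm d x + vnorm d y)) by lra. apply sqrt_le_1_alt.
  replace (sumn d (fun i => (x i + y i) * (x i + y i))) with
    (sumn d (fun i => x i * x i) + 2 * sumn d (fun i => x i * y i) + sumn d (fun i => y i * y i)).
  nra. rewrite !sumn_lsum. rewrite <- lsum_scal, <- !lsum_plus. apply lsum_ext; intros; ring. Qed.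
Lemma vnorm_comp d x i : (i < d)%nat -> Rabs (x i) <= vnorm d x.
Proof. intros Hi. unfold vnorm. rewrite <- sqrt_Rsqr_abs. apply sqrt_le_1_alt. unfold Rsqr.
  apply (sumn_single d (fun i => x i * x i)); auto. intros; nra. Qed.

Definition rho d k := sqrt (knorm2 d k).
Lemma rho_vnorm d k : rho d k = vnorm d (kcomp k).
Proof. reflexivity. Qed.
Lemma knorm2_nonneg d k : 0 <= knorm2 d k.
Proof. apply sumn_nonneg; intros; nra. Qed.
Lemma rho_nonneg d k : 0 <= rho d k.
Proof. apply sqrt_pos. Qed.
Lemma rho_sq d k : rho d k * rho d k = knorm2 d k.
Proof. apply sqrt_sqrt, knorm2_nonneg. Qed.

Lemma length_ksub k j : length (ksub k j) = Nat.min (length k) (length j).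
Proof. unfold ksub. rewrite length_map, length_combine; auto. Qed.
Lemma nth_ksub k j i : length k = length j -> nth i (ksub k j) 0%Z = (nth i k 0 - nth i j 0)%Z.
Proof. intros H. unfold ksub. change 0%Z with ((fun p : Z * Z => (fst p - snd p)%Z) (0%Z, 0%Z)) at 1.
  rewrite map_nth. rewrite combine_nth by auto. reflexivity. Qed.
Lemma kcomp_ksub k j i : length k = length j -> kcomp (ksub k j) i = kcomp k i - kcomp j i.
Proof. intros H. unfold kcomp. rewrite nth_ksub by auto. apply minus_IZR. Qed.

Lemma ksub_inj_r d k x y : length k = d -> length x = d -> length y = d -> ksub k x = ksub k y -> x = y.
Proof. intros Hk Hx Hy H. apply nth_ext with 0%Z 0%Z. lia. intros n Hn.
  assert (E := f_equal (fun l => nth n l 0%Z) H). simpl in E. rewrite !nth_ksub in E by lia. lia. Qed.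
Lemma ksub_inj_l d k x y : length k = d -> length x = d -> length y = d -> ksub x k = ksub y k -> x = y.
Proof. intros Hk Hx Hy H. apply nth_ext with 0%Z 0%Z. lia. intros n Hn.
  assert (E := f_equal (fun l => nth n l 0%Z) H). simpl in E. rewrite !nth_ksub in E by lia. lia. Qed.
Lemma length_ksub_d d k j : length k = d -> length j = d -> length (ksub k j) = d.
Proof. intros; rewrite length_ksub; lia. Qed.

Lemma rho_tri1 d k j : length k = d -> length j = d -> rho d k <= rho d j + rho d (ksub k j).
Proof. intros Hk Hj. rewrite !rho_vnorm.
  rewrite (vnorm_ext d (kcomp k) (fun i => kcomp j i + kcomp (ksub k j) i)). apply vnorm_add.
  intros i Hi; rewrite kcomp_ksub by lia; ring. Qed.
Lemma rho_tri2 d k j : length k = d -> length j = d -> rho d j <= rho d k + rho d (ksub k j).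
Proof. intros Hk Hj. rewrite !rho_vnorm. rewrite <- (vnorm_opp d (kcomp (ksub k j))).
  rewrite (vnorm_ext d (kcomp j) (fun i => kcomp k i + - kcomp (ksub k j) i)). apply vnorm_add.
  intros i Hi; rewrite kcomp_ksub by lia; ring. Qed.
Lemma kcomp_le_rho d k i : (i < d)%nat -> Rabs (kcomp k i) <= rho d k.
Proof. intros Hi; rewrite rho_vnorm; apply vnorm_comp; auto. Qed.

Lemma knorm2_zero d k : length k = d -> knorm2 d k = 0 -> k = repeat 0%Z d.
Proof. intros Hl H. apply nth_ext with 0%Z 0%Z. rewrite repeat_length; auto. intros n Hn.
  rewrite nth_repeat. assert (kcomp k n * kcomp k n <= knorm2 d k).
  { apply (sumn_single d (fun i => kcomp k i * kcomp k i)). intros; nra. lia. }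
  assert (kcomp k n = 0) by nra. unfold kcomp in H1. apply eq_IZR in H1. auto. Qed.

Lemma knorm2_cases d k : knorm2 d k = 0 \/ 1 <= knorm2 d k.
Proof. destruct (classic (forall i, (i < d)%nat -> kcomp k i = 0)) as [H|H].
  - left. unfold knorm2. rewrite (sumn_ext d _ (fun _ => 0)). rewrite sumn_const; ring.
    intros i Hi; rewrite H; auto; ring.
  - right. apply not_all_ex_not in H. destruct H as [i Hi]. apply imply_to_and in Hi. destruct Hi as [Hi Hne].
    assert (kcomp k i * kcomp k i <= knorm2 d k).
    { apply (sumn_single d (fun i => kcomp k i * kcomp k i)). intros; nra. lia. }
    unfold kcomp in *. destruct (nth i k 0%Z) as [|p|p] eqn:E. simpl in Hne; lra.
    + assert (1 <= IZR (Z.pos p)) by (apply IZR_le; lia). nra.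
    + assert (IZR (Z.neg p) <= -1) by (apply IZR_le; lia). nra. Qed.


Lemma exp_le_mono x y : x <= y -> exp x <= exp y.
Proof. intros [H|H]. left; apply exp_increasing; auto. subst; lra. Qed.
Lemma ln_le_mono x y : 0 < x -> x <= y -> ln x <= ln y.
Proof. intros Hx [H|H]. left; apply ln_increasing; auto. subst; lra. Qed.
Lemma ln_le_sub1 x : 0 < x -> ln x <= x - 1.
Proof. intros Hx. pose proof (exp_ineq1_le (ln x)). rewrite exp_ln in H by auto. lra. Qed.
Lemma ln_0 : ln 0 = 0.
Proof. unfold ln. destruct (Rlt_dec 0 0) as [H|H]; [exfalso; lra|reflexivity]. Qed.
Lemma Rpower_0_base e : Rpower 0 e = 1.
Proof. unfold Rpower. rewrite ln_0, Rmult_0_r, exp_0; auto. Qed.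
Lemma Rpower_pos a e : 0 < Rpower a e.
Proof. apply exp_pos. Qed.
Lemma Rpower_anti a b e : 0 < a -> a <= b -> e <= 0 -> Rpower b e <= Rpower a e.
Proof. intros Ha Hab He. unfold Rpower. apply exp_le_mono. pose proof (ln_le_mono a b Ha Hab). nra. Qed.
Lemma Rpower_exp_mono a e1 e2 : 1 <= a -> e1 <= e2 -> Rpower a e1 <= Rpower a e2.
Proof. intros Ha He. unfold Rpower. apply exp_le_mono. pose proof (ln_le_mono 1 a ltac:(lra) Ha). rewrite ln_1 in H. nra. Qed.
Lemma Rpower_1_base e : Rpower 1 e = 1.
Proof. unfold Rpower; rewrite ln_1, Rmult_0_r, exp_0; auto. Qed.
Lemma Rpower_le1 a e : 1 <= a -> e <= 0 -> Rpower a e <= 1.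
Proof. intros Ha He. rewrite <- (Rpower_1_base e). apply Rpower_anti; lra. Qed.
Lemma Rpower_ge1 a e : 1 <= a -> 0 <= e -> 1 <= Rpower a e.
Proof. intros Ha He. rewrite <- (Rpower_O a) by lra. apply Rpower_exp_mono; lra. Qed.

Lemma tele x s : 1 <= x -> 1 < s ->
  Rpower (x + 1) (- s) <= (Rpower x (1 - s) - Rpower (x + 1) (1 - s)) / (s - 1).
Proof. intros Hx Hs.
  set (L0 := ln x). set (L1 := ln (x + 1)).
  assert (HL : 1 / (x + 1) <= L1 - L0).
  { unfold L0, L1.
    assert (H1 : ln (x / (x+1)) <= x/(x+1) - 1) by (apply ln_le_sub1; apply Rdiv_lt_0_compat; lra).
    assert (H2 : ln x = ln (x / (x+1)) + ln (x+1)).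
    { rewrite <- ln_mult. f_equal; field; lra. apply Rdiv_lt_0_compat; lra. lra. }
    replace (x / (x+1) - 1) with (- (1 / (x+1))) in H1 by (field; lra). lra. }
  assert (He : 1 + (s - 1) * (L1 - L0) <= exp ((s - 1) * (L1 - L0))) by apply exp_ineq1_le.
  assert (E1 : Rpower x (1 - s) = Rpower (x + 1) (- s) * (x + 1) * exp ((s - 1) * (L1 - L0))).
  { unfold Rpower. fold L0 L1. replace (x + 1) with (exp L1) at 1 by (unfold L1; apply exp_ln; lra).
    rewrite <- !exp_plus. f_equal. ring. }
  assert (E2 : Rpower (x + 1) (1 - s) = Rpower (x + 1) (- s) * (x + 1)).
  { unfold Rpower. fold L1. replace (x + 1) with (exp L1) at 1 by (unfold L1; apply exp_ln; lra).
    rewrite <- !exp_plus. f_equal. ring. }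
  rewrite E1, E2. set (A := Rpower (x+1) (-s)). assert (0 < A) by apply Rpower_pos.
  apply Rmult_le_reg_r with (s - 1). lra. unfold Rdiv. rewrite Rmult_assoc, Rinv_l, Rmult_1_r by lra.
  assert ((s-1) * (L1 - L0) * (x+1) >= (s - 1)). { 
    assert ((s - 1) * (1 / (x+1)) * (x + 1) = s - 1) by (field; lra).
    assert ((s-1) * (L1 - L0) >= (s-1) * (1/(x+1))) by nra. nra. }
  set (E := exp ((s - 1) * (L1 - L0))) in *.
  assert (H2 : (x + 1) * (E - 1) >= s - 1) by nra.
  assert (H3 : A * ((x + 1) * (E - 1)) >= A * (s - 1)) by (apply Rmult_ge_compat_l; lra).
  replace ((A * (x + 1) * E - A * (x + 1)) * / (s - 1) * (s - 1)) with (A * ((x + 1) * (E - 1))) by (field; lra).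
  lra. Qed.

Lemma zrange_S N : zrange (S N) = (- Z.of_nat (S N))%Z :: zrange N ++ [Z.of_nat (S N)].
Proof. unfold zrange. replace (2 * S N + 1)%nat with (S (S (2 * N + 1))) by lia.
  rewrite seq_S, <- cons_seq, map_app, map_cons. rewrite <- app_comm_cons. f_equal. f_equal.
  - rewrite <- seq_shift, map_map. apply map_ext. intros; lia.
  - cbn [map]. f_equal. lia. Qed.

Definition g1 (p : R) (z : Z) : R := Rpower (1 + IZR z * IZR z) (- p).

Lemma g1_le1 p z : 0 <= p -> g1 p z <= 1.
Proof. intros Hp. unfold g1. apply Rpower_le1. nra. lra. Qed.
Lemma g1_nonneg p z : 0 <= g1 p z.
Proof. left; apply Rpower_pos. Qed.
Lemma g1_bound p n : 0 <= p -> (1 <= n)%nat -> g1 p (Z.of_nat n) <= Rpower (INR n) (- (2 * p)) /\ g1 p (- Z.of_nat n)%Z <= Rpower (INR n) (- (2 * p)).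
Proof. intros Hp Hn. assert (Hn' : 1 <= INR n) by (apply (le_INR 1); lia).
  assert (E : Rpower (INR n) (- (2 * p)) = Rpower (INR n * INR n) (- p)).
  { replace (INR n * INR n) with (Rpower (INR n) 2). rewrite Rpower_mult. f_equal; ring.
    replace 2 with (INR 2) by (simpl; ring). rewrite Rpower_pow by lra. simpl; ring. }
  rewrite E. unfold g1. rewrite opp_IZR, <- INR_IZR_INZ. split; apply Rpower_anti; nra. Qed.

Lemma zsum_bound p : 1 / 2 < p -> forall N, lsum (g1 p) (zrange N) <= 3 + 2 / (2 * p - 1).
Proof. intros Hp. set (s := 2 * p).
  assert (Hs : 1 < s) by (unfold s; lra).
  assert (Hpos : 0 < 2 / (s - 1)) by (apply Rdiv_lt_0_compat; lra).
  assert (Hmain : forall N, (1 <= N)%nat -> lsum (g1 p) (zrange N) <= 3 + 2 / (s - 1) - 2 / (s - 1) * Rpower (INR N) (1 - s)).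
  { induction N; intros HN. lia. destruct (Nat.eq_dec N 0) as [->|HN0].
    - rewrite zrange_S. simpl. unfold lsum; simpl. replace (INR 1) with 1 by (simpl; ring). rewrite Rpower_1_base.
      pose proof (g1_le1 p (-1)%Z ltac:(lra)); pose proof (g1_le1 p 1%Z ltac:(lra)); pose proof (g1_le1 p 0%Z ltac:(lra)). simpl in *. lra.
    - specialize (IHN ltac:(lia)). rewrite zrange_S, lsum_cons, lsum_app, lsum_cons, lsum_nil.
      destruct (g1_bound p (S N) ltac:(lra) ltac:(lia)) as [B1 B2].
      assert (T := tele (INR N) s ltac:(apply (le_INR 1); lia) Hs).
      rewrite S_INR in *. fold s in B1, B2. replace (- (2*p)) with (- s) in * by (unfold s; ring).
      assert (E : 2 / (s - 1) * Rpower (INR N) (1 - s) - 2 / (s - 1) * Rpower (INR N + 1) (1 - s) = 2 * ((Rpower (INR N) (1 - s) - Rpower (INR N + 1) (1 - s)) / (s - 1))) by (field; lra).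
      lra. }
  intros N. destruct N. unfold zrange, lsum; simpl. unfold g1. simpl. replace (1 + 0 * 0) with 1 by ring. rewrite Rpower_1_base. fold s; lra.
  pose proof (Hmain (S N) ltac:(lia)). pose proof (Rpower_pos (INR (S N)) (1 - s)). fold s. nra. Qed.

Definition sq (l : list Z) : R := fold_right (fun z s => IZR z * IZR z + s) 0 l.
Lemma knorm2_sq l : knorm2 (length l) l = sq l.
Proof. induction l as [|z t IH]. reflexivity.
  change (lsum (fun i => kcomp (z::t) i * kcomp (z::t) i) (0%nat :: seq 1 (length t)) = sq (z :: t)).
  rewrite lsum_cons, <- seq_shift, lsum_map. simpl. rewrite <- IH. reflexivity. Qed.
Lemma sq_nonneg l : 0 <= sq l.
Proof. induction l; simpl; nra. Qed.

Definition P1 (l : list Z) : R := fold_right (fun z a => (1 + IZR z * IZR z) * a) 1 l.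
Lemma P1_pos l : 0 < P1 l.
Proof. induction l; simpl; nra. Qed.
Lemma P1_le l : P1 l <= (1 + sq l) ^ (length l).
Proof. induction l as [|z t IH]; simpl. lra.
  pose proof (sq_nonneg t). pose proof (P1_pos t).
  assert (1 <= 1 + sq t) by lra. assert ((1 + sq t) ^ length t <= (1 + (IZR z * IZR z + sq t)) ^ length t).
  { apply pow_incr. nra. }
  assert (0 <= IZR z * IZR z) by nra. nra. Qed.

Definition Pi (p : R) (l : list Z) : R := fold_right (fun z a => g1 p z * a) 1 l.
Lemma Pi_eq p l : Pi p l = Rpower (P1 l) (- p).
Proof. induction l as [|z t IH]; simpl. rewrite Rpower_1_base; auto.
  rewrite IH. unfold g1. rewrite Rpower_mult_distr; auto. nra. apply P1_pos. Qed.

Lemma lsum_Pi_box p d N : lsum (Pi p) (box d N) = (lsum (g1 p) (zrange N)) ^ d.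
Proof. induction d; simpl. unfold lsum; simpl; ring.
  rewrite lsum_flat_map. rewrite (lsum_ext _ (fun z => g1 p z * (lsum (g1 p) (zrange N)) ^ d)).
  rewrite (lsum_ext (fun z => g1 p z * _) (fun z => (lsum (g1 p) (zrange N)) ^ d * g1 p z)) by (intros; ring).
  rewrite lsum_scal. ring.
  intros z _. rewrite lsum_map. simpl. rewrite lsum_scal, IHd. reflexivity. Qed.

Lemma h_bound d l : (1 <= d)%nat -> length l = d ->
  Rpower (knorm2 d l) (- ((INR d + 1) / 2)) <= Rpower 2 ((INR d + 1) / 2) * Pi (((INR d + 1) / 2) / INR d) l.
Proof. intros Hd Hl. set (q := (INR d + 1) / 2). set (p := q / INR d).
  assert (HdR : 1 <= INR d) by (apply (le_INR 1); auto).
  assert (Hq : 0 < q) by (unfold q; lra). assert (Hp : 0 < p) by (unfold p; apply Rdiv_lt_0_compat; lra).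
  assert (H2q : 1 <= Rpower 2 q) by (apply Rpower_ge1; lra).
  rewrite Pi_eq. assert (HP := P1_le l). rewrite Hl in HP.
  assert (Hk : knorm2 d l = sq l) by (rewrite <- Hl; apply knorm2_sq). rewrite Hk.
  destruct (knorm2_cases d l) as [H0|H1].
  - rewrite Hk in H0. rewrite H0, Rpower_0_base. rewrite H0 in HP.
    replace (1 + 0) with 1 in HP by ring. rewrite pow1 in HP.
    assert (Rpower 1 (-p) <= Rpower (P1 l) (-p)). { apply Rpower_anti. apply P1_pos. auto. lra. }
    rewrite Rpower_1_base in H. nra.
  - rewrite Hk in H1. set (n := sq l) in *.
    assert (E1 : Rpower n (- q) <= Rpower ((1 + n) / 2) (- q)) by (apply Rpower_anti; lra).
    assert (E2 : Rpower ((1 + n) / 2) (- q) = Rpower 2 q * Rpower (1 + n) (- q)).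
    { unfold Rdiv, Rpower. rewrite ln_mult, ln_Rinv by lra. rewrite <- exp_plus. f_equal; ring. }
    assert (E3 : Rpower (1 + n) (- q) = Rpower ((1 + n) ^ d) (- p)).
    { rewrite <- Rpower_pow by lra. rewrite Rpower_mult. f_equal. unfold p; field; lra. }
    assert (E4 : Rpower ((1 + n) ^ d) (- p) <= Rpower (P1 l) (- p)) by (apply Rpower_anti; [apply P1_pos|auto|lra]).
    pose proof (Rpower_pos (1+n) (-q)). nra. Qed.

Lemma lattice_sum d : (1 <= d)%nat -> exists K2, 1 <= K2 /\
  forall r N, r > (INR d + 1) / 2 -> lsum (fun l => Rpower (knorm2 d l) (- r)) (box d N) <= K2.
Proof. intros Hd. set (q := (INR d + 1) / 2). set (p := q / INR d).
  assert (HdR : 1 <= INR d) by (apply (le_INR 1); auto).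
  assert (Hp : 1/2 < p). { unfold p, q. apply Rmult_lt_reg_r with (INR d). lra. field_simplify; lra. }
  set (G := 3 + 2 / (2 * p - 1)).
  assert (HG : 3 <= G). { unfold G. assert (0 < 2 / (2*p-1)) by (apply Rdiv_lt_0_compat; lra). lra. }
  exists (Rpower 2 q * G ^ d). split.
  { assert (1 <= Rpower 2 q) by (apply Rpower_ge1; unfold q; lra). assert (1 <= G ^ d) by (apply pow_R1_Rle; lra). nra. }
  intros r N Hr. eapply Rle_trans.
  - apply (lsum_le _ (fun l => Rpower 2 q * Pi p l)). intros l Hl. apply in_box in Hl. destruct Hl as [Hl _].
    eapply Rle_trans; [|apply h_bound; auto]. destruct (knorm2_cases d l) as [H0|H1].
    + rewrite H0, !Rpower_0_base; lra.
    + apply Rpower_exp_mono; auto. unfold q in *; lra.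
  - rewrite lsum_scal, lsum_Pi_box. assert (0 < Rpower 2 q) by apply Rpower_pos. apply Rmult_le_compat_l. lra.
    apply pow_incr. split. apply lsum_nonneg; intros; apply g1_nonneg. apply zsum_bound; auto. Qed.


Lemma nested_CS {A B} (l1 : list A) (l2 : list B) (f g : A -> B -> R) :
  lsum (fun a => lsum (fun b => f a b * g a b) l2) l1 <=
  sqrt (lsum (fun a => lsum (fun b => f a b * f a b) l2) l1) * sqrt (lsum (fun a => lsum (fun b => g a b * g a b) l2) l1).
Proof.
  assert (E : forall (F : A -> B -> R), lsum (fun a => lsum (fun b => F a b) l2) l1 =
     lsum (fun p => F (fst p) (snd p)) (flat_map (fun a => map (fun b => (a, b)) l2) l1)).
  { intros F. rewrite lsum_flat_map. apply lsum_ext; intros a _. rewrite lsum_map. reflexivity. }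
  rewrite !E. apply (lsum_CS (fun p => f (fst p) (snd p)) (fun p => g (fst p) (snd p))). Qed.

Lemma sqrt_mul_le a b : 0 <= a -> 0 <= b -> sqrt (a * b) = sqrt a * sqrt b.
Proof. intros; apply sqrt_mult; auto. Qed.

Section Young.
Variable d : nat.
Variables x y z : wave -> R.
Variables X2 Y2 Z : R.
Hypothesis Hx : forall k, length k = d -> 0 <= x k.
Hypothesis Hy : forall k, length k = d -> 0 <= y k.
Hypothesis Hz : forall k, length k = d -> 0 <= z k.
Hypothesis HX : forall N, Rpsum d (fun k => x k * x k) N <= X2.
Hypothesis HY : forall N, Rpsum d (fun k => y k * y k) N <= Y2.
Hypothesis HZ : forall N, Rpsum d z N <= Z.

Lemma HZ0 : 0 <= Z.
Proof. eapply Rle_trans; [|apply (HZ 0%nat)]. apply lsum_nonneg. intros k Hk; apply Hz; apply in_box in Hk; tauto. Qed.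
Lemma HX0 : 0 <= X2.
Proof. eapply Rle_trans; [|apply (HX 0%nat)]. apply lsum_nonneg. intros k Hk; nra. Qed.
Lemma HY0 : 0 <= Y2.
Proof. eapply Rle_trans; [|apply (HY 0%nat)]. apply lsum_nonneg. intros k Hk; nra. Qed.

Lemma transl_r k M : length k = d -> lsum (fun j => z (ksub k j)) (box d M) <= Z.
Proof. intros Hk. apply (lsum_inj_box d z (ksub k)); auto.
  intros j Hj; apply length_ksub_d; auto. intros a b Ha Hb; apply (ksub_inj_r d); auto. Qed.
Lemma transl_l j N (f : wave -> R) F : length j = d -> (forall k, length k = d -> 0 <= f k) -> (forall N, Rpsum d f N <= F) ->
  lsum (fun k => f (ksub k j)) (box d N) <= F.
Proof. intros Hj Hf HF. apply (lsum_inj_box d f (fun k => ksub k j)); auto.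
  intros k Hk; apply length_ksub_d; auto. intros a b Ha Hb; apply (ksub_inj_l d j); auto. Qed.

Lemma YoungA N M : lsum (fun k => lsum (fun j => x k * y j * z (ksub k j)) (box d M)) (box d N) <= sqrt X2 * sqrt Y2 * Z.
Proof.
  assert (Hin : forall l, In l (box d N) \/ In l (box d M) -> length l = d) by (intros l [H|H]; apply in_box in H; tauto).
  eapply Rle_trans.
  - apply (lsum_le _ (fun k => lsum (fun j => (x k * sqrt (z (ksub k j))) * (y j * sqrt (z (ksub k j)))) (box d M))).
    intros k Hk. apply Req_le. apply lsum_ext. intros j Hj.
    assert (0 <= z (ksub k j)) by (apply Hz, length_ksub_d; apply Hin; auto).
    transitivity (x k * y j * (sqrt (z (ksub k j)) * sqrt (z (ksub k j)))). rewrite sqrt_sqrt; auto. ring.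
  - eapply Rle_trans; [apply nested_CS|].
    assert (H1 : lsum (fun k => lsum (fun j => x k * sqrt (z (ksub k j)) * (x k * sqrt (z (ksub k j)))) (box d M)) (box d N) <= X2 * Z).
    { eapply Rle_trans. apply (lsum_le _ (fun k => x k * x k * Z)). intros k Hk.
      rewrite (lsum_ext _ (fun j => x k * x k * z (ksub k j))). rewrite lsum_scal.
      apply Rmult_le_compat_l. nra. apply transl_r; apply Hin; auto.
      intros j Hj. assert (0 <= z (ksub k j)) by (apply Hz, length_ksub_d; apply Hin; auto).
      transitivity (x k * x k * (sqrt (z (ksub k j)) * sqrt (z (ksub k j)))). ring. rewrite sqrt_sqrt; auto.
      rewrite (lsum_ext _ (fun k => Z * (x k * x k))) by (intros; ring). rewrite lsum_scal.
      pose proof HZ0. assert (HXN := HX N); change (lsum (fun k => x k * x k) (box d N) <= X2) in HXN. nra. }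
    assert (H2 : lsum (fun k => lsum (fun j => y j * sqrt (z (ksub k j)) * (y j * sqrt (z (ksub k j)))) (box d M)) (box d N) <= Y2 * Z).
    { rewrite lsum_swap. eapply Rle_trans. apply (lsum_le _ (fun j => y j * y j * Z)). intros j Hj.
      rewrite (lsum_ext _ (fun k => y j * y j * z (ksub k j))). rewrite lsum_scal.
      apply Rmult_le_compat_l. nra. apply (transl_l j N z Z); auto; apply Hin; auto.
      intros k Hk. assert (0 <= z (ksub k j)) by (apply Hz, length_ksub_d; apply Hin; auto).
      transitivity (y j * y j * (sqrt (z (ksub k j)) * sqrt (z (ksub k j)))). ring. rewrite sqrt_sqrt; auto.
      rewrite (lsum_ext _ (fun k => Z * (y k * y k))) by (intros; ring). rewrite lsum_scal.
      pose proof HZ0. assert (HYM := HY M); change (lsum (fun k => y k * y k) (box d M) <= Y2) in HYM. nra. }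
    apply sqrt_le_1_alt in H1. apply sqrt_le_1_alt in H2.
    rewrite sqrt_mult in H1, H2 by (apply HX0 || apply HY0 || apply HZ0).
    pose proof HZ0. pose proof (sqrt_sqrt Z HZ0). pose proof (sqrt_pos X2). pose proof (sqrt_pos Y2). pose proof (sqrt_pos Z).
    eapply Rle_trans. apply Rmult_le_compat; [apply sqrt_pos|apply sqrt_pos|exact H1|exact H2]. nra. Qed.

Lemma YoungB N M : lsum (fun k => lsum (fun j => x k * y (ksub k j) * z j) (box d M)) (box d N) <= sqrt X2 * sqrt Y2 * Z.
Proof.
  assert (Hin : forall l, In l (box d N) \/ In l (box d M) -> length l = d) by (intros l [H|H]; apply in_box in H; tauto).
  eapply Rle_trans.
  - apply (lsum_le _ (fun k => lsum (fun j => (x k * sqrt (z j)) * (y (ksub k j) * sqrt (z j))) (box d M))).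
    intros k Hk. apply Req_le. apply lsum_ext. intros j Hj.
    assert (0 <= z j) by (apply Hz; apply Hin; auto).
    transitivity (x k * y (ksub k j) * (sqrt (z j) * sqrt (z j))). rewrite sqrt_sqrt; auto. ring.
  - eapply Rle_trans; [apply nested_CS|].
    assert (H1 : lsum (fun k => lsum (fun j => x k * sqrt (z j) * (x k * sqrt (z j))) (box d M)) (box d N) <= X2 * Z).
    { eapply Rle_trans. apply (lsum_le _ (fun k => x k * x k * Z)). intros k Hk.
      rewrite (lsum_ext _ (fun j => x k * x k * z j)). rewrite lsum_scal.
      apply Rmult_le_compat_l. nra. apply HZ.
      intros j Hj. assert (0 <= z j) by (apply Hz; apply Hin; auto).
      transitivity (x k * x k * (sqrt (z j) * sqrt (z j))). ring. rewrite sqrt_sqrt; auto.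
      rewrite (lsum_ext _ (fun k => Z * (x k * x k))) by (intros; ring). rewrite lsum_scal.
      pose proof HZ0. assert (HXN := HX N); change (lsum (fun k => x k * x k) (box d N) <= X2) in HXN. nra. }
    assert (H2 : lsum (fun k => lsum (fun j => y (ksub k j) * sqrt (z j) * (y (ksub k j) * sqrt (z j))) (box d M)) (box d N) <= Y2 * Z).
    { rewrite lsum_swap. eapply Rle_trans. apply (lsum_le _ (fun j => z j * Y2)). intros j Hj.
      rewrite (lsum_ext _ (fun k => z j * (y (ksub k j) * y (ksub k j)))). rewrite lsum_scal.
      apply Rmult_le_compat_l. apply Hz; apply Hin; auto. apply (transl_l j N (fun w => y w * y w) Y2); auto.
      intros k Hk; nra.
      intros k Hk. assert (0 <= z j) by (apply Hz; apply Hin; auto).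
      transitivity (y (ksub k j) * y (ksub k j) * (sqrt (z j) * sqrt (z j))). ring. rewrite sqrt_sqrt; auto. ring.
      rewrite (lsum_ext _ (fun k => Y2 * z k)) by (intros; ring). rewrite lsum_scal.
      pose proof HY0. assert (HZM := HZ M); change (lsum z (box d M) <= Z) in HZM. nra. }
    apply sqrt_le_1_alt in H1. apply sqrt_le_1_alt in H2.
    rewrite sqrt_mult in H1, H2 by (apply HX0 || apply HY0 || apply HZ0).
    pose proof HZ0. pose proof (sqrt_sqrt Z HZ0). pose proof (sqrt_pos X2). pose proof (sqrt_pos Y2). pose proof (sqrt_pos Z).
    eapply Rle_trans. apply Rmult_le_compat; [apply sqrt_pos|apply sqrt_pos|exact H1|exact H2]. nra. Qed.
End Young.


Lemma Rpower_sum_le x y r : 0 < x -> 0 < y -> 0 <= r -> Rpower (x + y) r <= Rpower 2 r * (Rpower x r + Rpower y r).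
Proof. intros Hx Hy Hr.
  assert (H1 : Rpower (x + y) r <= Rpower (2 * Rmax x y) r).
  { apply Rle_Rpower_l; auto. split. lra. pose proof (Rmax_l x y); pose proof (Rmax_r x y). lra. }
  rewrite <- Rpower_mult_distr in H1 by (try lra; pose proof (Rmax_l x y); lra).
  pose proof (Rpower_pos x r); pose proof (Rpower_pos y r); pose proof (Rpower_pos 2 r).
  unfold Rmax in H1; destruct (Rle_dec x y); nra. Qed.

Lemma sqrt_add_le x y : 0 <= x -> 0 <= y -> sqrt (x + y) <= sqrt x + sqrt y.
Proof. intros Hx Hy. pose proof (sqrt_pos x); pose proof (sqrt_pos y).
  rewrite <- (sqrt_square (sqrt x + sqrt y)) by lra. apply sqrt_le_1_alt.
  pose proof (sqrt_sqrt x Hx); pose proof (sqrt_sqrt y Hy). nra. Qed.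

Lemma key_real Pk Pj Pl Ek Ej El Uk Ul Uj sk sj sl T :
  0 <= Pk -> 0 <= Pj -> 0 <= Pl -> 0 <= Ek -> 0 <= Ej -> 0 <= El -> 0 <= Uk -> 0 <= Ul -> 0 <= Uj ->
  0 <= sk -> 0 <= sj -> 0 <= sl -> 0 <= T ->
  Pk <= T * (Pj + Pl) -> Ek <= Ej * El -> sj <= sk + sl ->
  Pk * Pk * (Ek * Ek) * Uk * (Ul * (sj * sj) * Uj) <=
  T * ((Pk*sk*Ek*Uk)*(Pj*sj*Ej*Uj)*(El*Ul) + (Pk*Ek*Uk)*(Pj*sj*Ej*Uj)*(sl*El*Ul)
     + (Pk*sk*Ek*Uk)*(Pl*El*Ul)*(sj*Ej*Uj) + (Pk*Ek*Uk)*(Pl*sl*El*Ul)*(sj*Ej*Uj)).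
Proof. intros. set (X := Pk * Ek * Uk * sj * Uj * Ul).
  assert (0 <= X) by (unfold X; repeat apply Rmult_le_pos; auto).
  replace (Pk * Pk * (Ek * Ek) * Uk * (Ul * (sj * sj) * Uj)) with (X * (Pk * Ek * sj)) by (unfold X; ring).
  replace (T * _) with (X * ((T * (Pj + Pl)) * (Ej * El) * (sk + sl))) by (unfold X; ring).
  apply Rmult_le_compat_l; auto. apply Rmult_le_compat; auto. apply Rmult_le_pos; auto.
  apply Rmult_le_compat; auto. Qed.

Section Main.
Variable d : nat.
Variables r beta : R.
Variable u : field.
Hypothesis Hd : (1 <= d)%nat.
Hypothesis Hr : r > (INR d + 1) / 2.
Hypothesis Hbeta : beta > 0.
Hypothesis Hu0 : forall m, (m < d)%nat -> u (repeat 0%Z d) m = C0.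
Hypothesis Hdiv : forall k, length k = d -> dotC d (fun i => CR (kcomp k i)) (u k) = C0.

Lemma HdR : 1 <= INR d.
Proof. apply (le_INR 1); auto. Qed.
Lemma Hr1 : 1 < r.
Proof. pose proof HdR. lra. Qed.

Definition U k := sqrt (cvnorm2 d (u k)).
Definition P k := Rpower (rho d k) r.
Definition E k := exp (beta * rho d k).
Definition Sq k := sqrt (rho d k).
Definition a k := P k * E k * U k.
Definition b k := P k * Sq k * E k * U k.
Definition c k := E k * U k.
Definition dd k := Sq k * E k * U k.

Lemma cvnorm2_nonneg w : 0 <= cvnorm2 d w.
Proof. apply sumn_nonneg; intros; apply Cmod2_nonneg. Qed.
Lemma U_nonneg k : 0 <= U k. Proof. apply sqrt_pos. Qed.
Lemma U_sq k : U k * U k = cvnorm2 d (u k). Proof. apply sqrt_sqrt, cvnorm2_nonneg. Qed.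
Lemma P_pos k : 0 < P k. Proof. apply Rpower_pos. Qed.
Lemma E_pos k : 0 < E k. Proof. apply exp_pos. Qed.
Lemma E_ge1 k : 1 <= E k.
Proof. unfold E. rewrite <- exp_0. apply exp_le_mono. pose proof (rho_nonneg d k). nra. Qed.
Lemma Sq_nonneg k : 0 <= Sq k. Proof. apply sqrt_pos. Qed.
Lemma Sq_sq k : Sq k * Sq k = rho d k. Proof. apply sqrt_sqrt, rho_nonneg. Qed.
Lemma a_nonneg k : 0 <= a k.
Proof. unfold a. pose proof (P_pos k); pose proof (E_pos k); pose proof (U_nonneg k). repeat apply Rmult_le_pos; lra. Qed.
Lemma b_nonneg k : 0 <= b k.
Proof. unfold b. pose proof (P_pos k); pose proof (E_pos k); pose proof (U_nonneg k); pose proof (Sq_nonneg k). repeat apply Rmult_le_pos; lra. Qed.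
Lemma c_nonneg k : 0 <= c k.
Proof. unfold c. pose proof (E_pos k); pose proof (U_nonneg k). repeat apply Rmult_le_pos; lra. Qed.
Lemma dd_nonneg k : 0 <= dd k.
Proof. unfold dd. pose proof (E_pos k); pose proof (U_nonneg k); pose proof (Sq_nonneg k). repeat apply Rmult_le_pos; lra. Qed.

Lemma U_zero k : length k = d -> knorm2 d k = 0 -> U k = 0.
Proof. intros Hl H0. apply knorm2_zero in H0; auto. unfold U. rewrite H0.
  unfold cvnorm2. rewrite (sumn_ext d _ (fun _ => 0)). rewrite sumn_const, Rmult_0_r, sqrt_0; auto.
  intros i Hi. rewrite Hu0 by auto. unfold Cmod2, C0; simpl; ring. Qed.

Lemma PP_eq k : P k * P k = Rpower (knorm2 d k) r.
Proof. unfold P. destruct (knorm2_cases d k) as [H0|H1].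
  - unfold rho. rewrite H0, sqrt_0, !Rpower_0_base. ring.
  - rewrite Rpower_mult_distr. rewrite rho_sq; auto. unfold rho; apply sqrt_lt_R0; lra. unfold rho; apply sqrt_lt_R0; lra. Qed.
Lemma EE_eq k : E k * E k = exp (2 * beta * sqrt (knorm2 d k)).
Proof. unfold E, rho. rewrite <- exp_plus. f_equal; ring. Qed.

Lemma symb_eq k : symb d r (2 * beta) k = P k * P k * (E k * E k).
Proof. unfold symb. rewrite PP_eq, EE_eq. reflexivity. Qed.

Lemma a_sq k : a k * a k = symb d r (2 * beta) k * cvnorm2 d (u k).
Proof. rewrite symb_eq, <- U_sq. unfold a; ring. Qed.

Lemma b_sq k : length k = d -> b k * b k = symb d (r + 1/2) (2 * beta) k * cvnorm2 d (u k).
Proof. intros Hl. destruct (knorm2_cases d k) as [H0|H1].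
  - rewrite <- U_sq, U_zero by auto. unfold b; rewrite U_zero by auto. ring.
  - unfold symb. rewrite <- EE_eq. rewrite Rpower_plus, <- PP_eq. rewrite <- U_sq.
    replace (1/2) with (/2) by field. rewrite Rpower_sqrt by lra. fold (rho d k). rewrite <- Sq_sq.
    unfold b; ring. Qed.

Lemma rho_ge1 k : length k = d -> U k <> 0 -> 1 <= rho d k.
Proof. intros Hl HU. destruct (knorm2_cases d k) as [H0|H1]. exfalso; apply HU; apply U_zero; auto.
  unfold rho. rewrite <- sqrt_1. apply sqrt_le_1_alt; auto. Qed.

Lemma a_le_b k : length k = d -> a k * a k <= b k * b k.
Proof. intros Hl. destruct (Req_dec (U k) 0) as [H|H].
  - unfold a, b; rewrite H. nra.
  - pose proof (rho_ge1 k Hl H). assert (1 <= Sq k) by (unfold Sq; rewrite <- sqrt_1; apply sqrt_le_1_alt; auto).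
    pose proof (a_nonneg k). replace (b k) with (a k * Sq k) by (unfold a, b; ring).
    assert (1 <= Sq k * Sq k) by nra. assert (0 <= a k * a k) by nra.
    replace (a k * Sq k * (a k * Sq k)) with ((a k * a k) * (Sq k * Sq k)) by ring. nra. Qed.

Lemma P_ge_rho k : length k = d -> U k <> 0 -> rho d k <= P k.
Proof. intros Hl HU. pose proof (rho_ge1 k Hl HU). unfold P. rewrite <- (Rpower_1 (rho d k)) at 1 by lra.
  apply Rpower_exp_mono; auto. pose proof Hr1; lra. Qed.

Lemma U_le_b k : length k = d -> U k * U k <= b k * b k.
Proof. intros Hl. destruct (Req_dec (U k) 0) as [H|H].
  - rewrite H. pose proof (b_nonneg k). nra.
  - pose proof (rho_ge1 k Hl H). pose proof (P_ge_rho k Hl H).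
    assert (1 <= Sq k) by (unfold Sq; rewrite <- sqrt_1; apply sqrt_le_1_alt; auto).
    pose proof (E_ge1 k). pose proof (U_nonneg k).
    assert (1 <= P k * Sq k * E k). { assert (1 <= P k * Sq k) by nra. nra. }
    unfold b. set (Q := P k * Sq k * E k) in *. replace (P k * Sq k * E k * U k) with (Q * U k) by (unfold Q; ring).
    assert (1 <= Q * Q) by nra. assert (0 <= U k * U k) by nra.
    replace (Q * U k * (Q * U k)) with ((Q * Q) * (U k * U k)) by ring. nra. Qed.

Lemma rhoU_le_b k : length k = d -> rho d k * U k * (rho d k * U k) <= b k * b k.
Proof. intros Hl. destruct (Req_dec (U k) 0) as [H|H].
  - rewrite H. pose proof (b_nonneg k). nra.
  - pose proof (rho_ge1 k Hl H). pose proof (P_ge_rho k Hl H).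
    assert (1 <= Sq k) by (unfold Sq; rewrite <- sqrt_1; apply sqrt_le_1_alt; auto).
    pose proof (E_ge1 k). pose proof (U_nonneg k).
    assert (rho d k <= P k * Sq k * E k). { assert (rho d k <= P k * Sq k) by nra. nra. }
    unfold b. set (Q := P k * Sq k * E k) in *. replace (P k * Sq k * E k * U k) with (Q * U k) by (unfold Q; ring).
    assert (0 <= rho d k * U k) by nra. assert (rho d k * U k <= Q * U k) by nra. nra. Qed.

Lemma key_pt k j : length k = d -> length j = d ->
  symb d r (2 * beta) k * U k * (U (ksub k j) * rho d j * U j) <=
  Rpower 2 r * (b k * b j * c (ksub k j) + a k * b j * dd (ksub k j) + b k * a (ksub k j) * dd j + a k * b (ksub k j) * dd j).
Proof. intros Hk Hj. set (l := ksub k j). assert (Hl : length l = d) by (apply length_ksub_d; auto).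
  pose proof (Rpower_pos 2 r).
  assert (HR : 0 <= Rpower 2 r * (b k * b j * c l + a k * b j * dd l + b k * a l * dd j + a k * b l * dd j)).
  { pose proof (a_nonneg k); pose proof (a_nonneg l); pose proof (b_nonneg k); pose proof (b_nonneg j); pose proof (b_nonneg l);
    pose proof (c_nonneg l); pose proof (dd_nonneg l); pose proof (dd_nonneg j).
    apply Rmult_le_pos; [lra|]. repeat first [apply Rplus_le_le_0_compat | assumption | apply Rmult_le_pos | apply U_nonneg | apply Sq_nonneg | (left; apply E_pos) | (left; apply P_pos)]. }
  destruct (Req_dec (U k) 0) as [Z1|Z1]. { rewrite Z1. replace (symb d r (2 * beta) k * 0 * (U l * rho d j * U j)) with 0 by ring. auto. }
  destruct (Req_dec (U l) 0) as [Z2|Z2]. { rewrite Z2. replace (symb d r (2 * beta) k * U k * (0 * rho d j * U j)) with 0 by ring. auto. }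
  destruct (Req_dec (U j) 0) as [Z3|Z3]. { rewrite Z3. replace (symb d r (2 * beta) k * U k * (U l * rho d j * 0)) with 0 by ring. auto. }
  pose proof (rho_ge1 k Hk Z1) as Rk. pose proof (rho_ge1 l Hl Z2) as Rl. pose proof (rho_ge1 j Hj Z3) as Rj.
  rewrite symb_eq. rewrite <- (Sq_sq j). unfold a, b, c, dd.
  apply key_real; try (apply Rlt_le; apply P_pos); try (apply Rlt_le; apply E_pos); try apply U_nonneg; try apply Sq_nonneg; try lra.
  - unfold P. eapply Rle_trans. apply Rle_Rpower_l. pose proof Hr1; lra. split. lra. apply (rho_tri1 d k j); auto.
    apply Rpower_sum_le; try lra. pose proof Hr1; lra.
  - unfold E. rewrite <- exp_plus. apply exp_le_mono. pose proof (rho_tri1 d k j Hk Hj). fold l in H0. nra.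
  - unfold Sq. eapply Rle_trans; [|apply sqrt_add_le; apply rho_nonneg]. apply sqrt_le_1_alt. apply (rho_tri2 d k j); auto. Qed.

Hypothesis Hb : Rhas_sum d (fun k => symb d (r + 1/2) (2 * beta) k * cvnorm2 d (u k)).
Variable K2 : R.
Hypothesis HK : forall N, lsum (fun l => Rpower (knorm2 d l) (- r)) (box d N) <= K2.

Definition B2 := Rsum d (fun k => symb d (r + 1/2) (2 * beta) k * cvnorm2 d (u k)).
Definition A2 := Rsum d (fun k => symb d r (2 * beta) k * cvnorm2 d (u k)).

Lemma in_box_len N k : In k (box d N) -> length k = d.
Proof. intros H; apply in_box in H; tauto. Qed.

Lemma B2_facts : Rconv d (fun k => symb d (r + 1/2) (2 * beta) k * cvnorm2 d (u k)) B2 /\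
  forall N, Rpsum d (fun k => b k * b k) N <= B2.
Proof. destruct (nonneg_has_sum d (fun k => symb d (r + 1/2) (2 * beta) k * cvnorm2 d (u k))) as [H1 H2]; auto.
  intros k Hk. rewrite <- b_sq by auto. pose proof (b_nonneg k); nra.
  split; auto. intros N. specialize (H2 N). eapply Rle_trans; [|exact H2]. apply Req_le. apply lsum_ext.
  intros k Hk. apply b_sq. apply (in_box_len N); auto. Qed.

Lemma A2_facts : Rconv d (fun k => symb d r (2 * beta) k * cvnorm2 d (u k)) A2 /\
  forall N, Rpsum d (fun k => a k * a k) N <= A2.
Proof. destruct (nonneg_bounded d (fun k => symb d r (2 * beta) k * cvnorm2 d (u k)) B2) as [H1 [H2 H3]].
  intros k Hk. rewrite <- a_sq. pose proof (a_nonneg k); nra.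
  intros N. eapply Rle_trans; [|apply (proj2 B2_facts N)]. apply lsum_le. intros k Hk. rewrite <- a_sq. apply a_le_b. apply (in_box_len N); auto.
  split; auto. intros N. eapply Rle_trans; [|exact (H2 N)]. apply Req_le. apply lsum_ext. intros; apply a_sq. Qed.

Lemma ww_eq k : / P k * / P k = Rpower (knorm2 d k) (- r).
Proof. rewrite Rpower_Ropp, <- PP_eq. field. pose proof (P_pos k); lra. Qed.

Lemma weighted_part (f : wave -> R) F N : (forall M, Rpsum d (fun k => f k * f k) M <= F) ->
  lsum (fun k => f k * / P k) (box d N) <= sqrt F * sqrt K2.
Proof. intros HF. eapply Rle_trans. apply lsum_CS. apply Rmult_le_compat; try apply sqrt_pos; apply sqrt_le_1_alt.
  apply HF. rewrite (lsum_ext _ (fun k => Rpower (knorm2 d k) (- r))). apply HK. intros; apply ww_eq. Qed.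

Lemma c_part N : Rpsum d c N <= sqrt A2 * sqrt K2.
Proof. eapply Rle_trans; [|apply (weighted_part a A2 N (proj2 A2_facts))]. apply Req_le. apply lsum_ext.
  intros k _. unfold c, a. field. pose proof (P_pos k); lra. Qed.
Lemma dd_part N : Rpsum d dd N <= sqrt B2 * sqrt K2.
Proof. eapply Rle_trans; [|apply (weighted_part b B2 N (proj2 B2_facts))]. apply Req_le. apply lsum_ext.
  intros k _. unfold dd, b. field. pose proof (P_pos k); lra. Qed.

Lemma lsum_plus4 {A} (f1 f2 f3 f4 : A -> R) l : lsum (fun x => f1 x + f2 x + f3 x + f4 x) l = lsum f1 l + lsum f2 l + lsum f3 l + lsum f4 l.
Proof. rewrite !lsum_plus. reflexivity. Qed.

Lemma A2_nonneg : 0 <= A2.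
Proof. eapply Rle_trans; [|apply (proj2 A2_facts 0%nat)]. apply lsum_nonneg; intros; nra. Qed.
Lemma B2_nonneg : 0 <= B2.
Proof. eapply Rle_trans; [|apply (proj2 B2_facts 0%nat)]. apply lsum_nonneg; intros; nra. Qed.

Lemma main_fin N M :
  lsum (fun k => symb d r (2 * beta) k * U k * lsum (fun j => U (ksub k j) * rho d j * U j) (box d M)) (box d N)
  <= Rpower 2 r * (4 * (sqrt A2 * B2 * sqrt K2)).
Proof.
  eapply Rle_trans.
  - apply (lsum_le _ (fun k => lsum (fun j => Rpower 2 r * (b k * b j * c (ksub k j) + a k * b j * dd (ksub k j) + b k * a (ksub k j) * dd j + a k * b (ksub k j) * dd j)) (box d M))).
    intros k Hk. rewrite <- lsum_scal. apply lsum_le. intros j Hj. apply key_pt; eapply in_box_len; eauto.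
  - rewrite (lsum_ext _ (fun k => Rpower 2 r * (lsum (fun j => b k * b j * c (ksub k j)) (box d M) + lsum (fun j => a k * b j * dd (ksub k j)) (box d M)
        + lsum (fun j => b k * a (ksub k j) * dd j) (box d M) + lsum (fun j => a k * b (ksub k j) * dd j) (box d M)))).
    2: { intros k _. rewrite lsum_scal, lsum_plus4. reflexivity. }
    rewrite lsum_scal, lsum_plus4. apply Rmult_le_compat_l. left; apply Rpower_pos.
    pose proof (proj2 A2_facts) as HA. pose proof (proj2 B2_facts) as HB.
    assert (T1 := YoungA d b b c B2 B2 (sqrt A2 * sqrt K2) (fun k _ => c_nonneg k) HB HB c_part N M).
    assert (T2 := YoungA d a b dd A2 B2 (sqrt B2 * sqrt K2) (fun k _ => dd_nonneg k) HA HB dd_part N M).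
    assert (T3 := YoungB d b a dd B2 A2 (sqrt B2 * sqrt K2) (fun k _ => dd_nonneg k) HB HA dd_part N M).
    assert (T4 := YoungB d a b dd A2 B2 (sqrt B2 * sqrt K2) (fun k _ => dd_nonneg k) HA HB dd_part N M).
    pose proof (sqrt_sqrt B2 B2_nonneg). set (sb := sqrt B2) in *.
    replace (4 * (sqrt A2 * B2 * sqrt K2)) with (sb * sb * (sqrt A2 * sqrt K2) + sqrt A2 * sb * (sb * sqrt K2)
      + sb * sqrt A2 * (sb * sqrt K2) + sqrt A2 * sb * (sb * sqrt K2)).
    lra. rewrite <- H. ring. Qed.

Lemma Cmod_le_U k i : (i < d)%nat -> Cmod (u k i) <= U k.
Proof. intros Hi. unfold Cmod, U. apply sqrt_le_1_alt. unfold cvnorm2.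
  apply (sumn_single d (fun i => Cmod2 (u k i))); auto. intros; apply Cmod2_nonneg. Qed.

Lemma Cmod_Csumn n f : Cmod (Csumn n f) <= sumn n (fun i => Cmod (f i)).
Proof. apply (Cmod_Clsum f). Qed.

Lemma dot_bound l j : Cmod (dotC d (u l) (fun i => CR (kcomp j i))) <= INR d * (U l * rho d j).
Proof. unfold dotC. eapply Rle_trans. apply Cmod_Csumn. rewrite <- sumn_const. apply sumn_le.
  intros i Hi. rewrite Cmod_mul, Cmod_CR. apply Rmult_le_compat. apply Cmod_nonneg. apply Rabs_pos.
  apply Cmod_le_U; auto. apply kcomp_le_rho; auto. Qed.

Lemma conv_bound k m j : (m < d)%nat ->
  Cmod (conv_term d u u k m j) <= INR d * (U (ksub k j) * rho d j * U j).
Proof. intros Hm. unfold conv_term. rewrite !Cmod_mul, Cmod_Ci, Rmult_1_l.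
  pose proof (dot_bound (ksub k j) j). pose proof (Cmod_le_U j m Hm).
  pose proof (Cmod_nonneg (dotC d (u (ksub k j)) (fun i => CR (kcomp j i)))). pose proof (Cmod_nonneg (u j m)).
  replace (INR d * (U (ksub k j) * rho d j * U j)) with (INR d * (U (ksub k j) * rho d j) * U j) by ring.
  apply Rmult_le_compat; auto. Qed.

Definition Gk k := Rsum d (fun j => U (ksub k j) * rho d j * U j).

Lemma UU_part N : Rpsum d (fun k => U k * U k) N <= B2.
Proof. eapply Rle_trans; [|apply (proj2 B2_facts N)]. apply lsum_le. intros k Hk. apply U_le_b; eapply in_box_len; eauto. Qed.

Lemma Q_bound k M : length k = d -> Rpsum d (fun j => U (ksub k j) * rho d j * U j) M <= B2.
Proof. intros Hk. change (lsum (fun j => U (ksub k j) * rho d j * U j) (box d M) <= B2).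
  rewrite (lsum_ext _ (fun j => U (ksub k j) * (rho d j * U j))) by (intros; ring).
  eapply Rle_trans. apply lsum_CS. pose proof (sqrt_sqrt B2 B2_nonneg).
  rewrite <- H. apply Rmult_le_compat; try apply sqrt_pos; apply sqrt_le_1_alt.
  - apply (lsum_inj_box d (fun w => U w * U w) (ksub k)). intros; nra. apply UU_part.
    intros j Hj; apply length_ksub_d; auto. intros x y Hx Hy; apply (ksub_inj_r d); auto.
  - eapply Rle_trans; [|apply (proj2 B2_facts M)]. apply lsum_le. intros j Hj. apply rhoU_le_b; eapply in_box_len; eauto. Qed.

Lemma G_facts k : length k = d ->
  Rconv d (fun j => U (ksub k j) * rho d j * U j) (Gk k) /\
  (forall M, Rpsum d (fun j => U (ksub k j) * rho d j * U j) M <= Gk k) /\ Gk k <= B2.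
Proof. intros Hk. apply (nonneg_bounded d _ B2). intros j Hj. pose proof (U_nonneg (ksub k j)); pose proof (U_nonneg j); pose proof (rho_nonneg d j).
  repeat apply Rmult_le_pos; auto. intros M; apply Q_bound; auto. Qed.

Lemma conv_facts k m : length k = d -> (m < d)%nat ->
  Chas_sum d (conv_term d u u k m) /\ Cmod (adv d u u k m) <= INR d * Gk k.
Proof. intros Hk Hm. destruct (G_facts k Hk) as [_ [H2 _]].
  destruct (cplx_abs_conv d (conv_term d u u k m) (fun j => INR d * (U (ksub k j) * rho d j * U j)) (INR d * Gk k)) as [A1 [_ A3]].
  intros j Hj; apply conv_bound; auto.
  intros M. change (lsum (fun j => INR d * (U (ksub k j) * rho d j * U j)) (box d M) <= INR d * Gk k).
  rewrite lsum_scal. apply Rmult_le_compat_l. pose proof HdR; lra. apply H2.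
  split; auto. Qed.

Lemma Re_Csumn n f : Re (Csumn n f) = sumn n (fun i => Re (f i)).
Proof. apply (Re_Clsum f). Qed.
Lemma Im_Csumn n f : Im (Csumn n f) = sumn n (fun i => Im (f i)).
Proof. apply (Im_Clsum f). Qed.

Definition Fk k := Csumn d (fun m => Cmul (Bop d u u k m) (Cconj (Ar_exp d r beta u k m))).

Lemma symb_nonneg k : 0 <= symb d r (2 * beta) k.
Proof. rewrite symb_eq. pose proof (P_pos k); pose proof (E_pos k). nra. Qed.
Lemma Gk_nonneg k : length k = d -> 0 <= Gk k.
Proof. intros Hk. destruct (G_facts k Hk) as [_ [H _]]. eapply Rle_trans; [|apply (H 0%nat)].
  apply lsum_nonneg. intros j _. pose proof (U_nonneg (ksub k j)); pose proof (U_nonneg j); pose proof (rho_nonneg d j).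
  repeat apply Rmult_le_pos; auto. Qed.

Lemma div_sums k : length k = d -> sumn d (fun i => kcomp k i * Re (u k i)) = 0 /\ sumn d (fun i => kcomp k i * Im (u k i)) = 0.
Proof. intros Hk. pose proof (Hdiv k Hk) as H. unfold dotC in H. split.
  - apply (f_equal Re) in H. rewrite Re_Csumn in H. simpl in H. rewrite <- H. apply sumn_ext. intros; simpl; ring.
  - apply (f_equal Im) in H. rewrite Im_Csumn in H. simpl in H. rewrite <- H. apply sumn_ext. intros; simpl; ring. Qed.

Lemma F_identity k : length k = d -> knorm2 d k <> 0 ->
  Fk k = Cmul (CR (symb d r (2 * beta) k)) (Csumn d (fun m => Cmul (adv d u u k m) (Cconj (u k m)))).
Proof. intros Hk Hn. destruct (div_sums k Hk) as [D1 D2].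
  unfold Fk, Bop, leray, Ar_exp. destruct (Req_EM_T (knorm2 d k) 0) as [e|e]; [contradiction|].
  set (w := adv d u u k). set (s := symb d r (2 * beta) k). set (n := knorm2 d k).
  set (D := dotC d (fun i => CR (kcomp k i)) w) in *.
  apply Cx_ext.
  - rewrite Re_Csumn. cbn [Re Im Cmul CR Cconj]. rewrite Re_Csumn.
    rewrite !sumn_lsum. rewrite sumn_lsum in D1, D2.
    transitivity (lsum (fun m => s * (Re (w m) * Re (u k m) + Im (w m) * Im (u k m)) + (- (s * Re D / n)) * (kcomp k m * Re (u k m))
       + (- (s * Im D / n)) * (kcomp k m * Im (u k m))) (seq 0 d)).
    + apply lsum_ext. intros m _. cbn [Re Im Cmul CR Cconj Cadd Copp]. field. auto.
    + rewrite !lsum_plus, !lsum_scal, D1, D2.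
      rewrite (lsum_ext (fun i => Re (Cmul (w i) (Cconj (u k i)))) (fun x => Re (w x) * Re (u k x) + Im (w x) * Im (u k x))).
      ring. intros; cbn [Re Im Cmul Cconj]; ring.
  - rewrite Im_Csumn. cbn [Re Im Cmul CR Cconj]. rewrite Im_Csumn.
    rewrite !sumn_lsum. rewrite sumn_lsum in D1, D2.
    transitivity (lsum (fun m => s * (Im (w m) * Re (u k m) - Re (w m) * Im (u k m)) + (- (s * Im D / n)) * (kcomp k m * Re (u k m))
       + (s * Re D / n) * (kcomp k m * Im (u k m))) (seq 0 d)).
    + apply lsum_ext. intros m _. cbn [Re Im Cmul CR Cconj Cadd Copp]. field. auto.
    + rewrite !lsum_plus, !lsum_scal, D1, D2.
      rewrite (lsum_ext (fun i => Im (Cmul (w i) (Cconj (u k i)))) (fun x => Im (w x) * Re (u k x) - Re (w x) * Im (u k x))).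
      ring. intros; cbn [Re Im Cmul Cconj]; ring.
Qed.

Lemma F_bound k : length k = d -> Cmod (Fk k) <= INR d * INR d * (symb d r (2 * beta) k * U k * Gk k).
Proof. intros Hk. pose proof HdR. pose proof (symb_nonneg k). pose proof (U_nonneg k). pose proof (Gk_nonneg k Hk).
  assert (0 <= INR d * INR d * (symb d r (2 * beta) k * U k * Gk k)) by (apply Rmult_le_pos; [nra| apply Rmult_le_pos; [apply Rmult_le_pos|]; auto]).
  destruct (Req_dec (knorm2 d k) 0) as [Z0|Z0].
  - unfold Fk. eapply Rle_trans. apply Cmod_Csumn. rewrite (sumn_ext d _ (fun _ => 0)). rewrite sumn_const. lra.
    intros m Hm. unfold Bop, leray. destruct (Req_EM_T (knorm2 d k) 0) as [e|e]; [|contradiction].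
    rewrite Cmod_mul, Cmod_C0; ring.
  - rewrite F_identity by auto. rewrite Cmod_mul, Cmod_CR, Rabs_pos_eq by auto.
    replace (INR d * INR d * (symb d r (2 * beta) k * U k * Gk k)) with (symb d r (2 * beta) k * (INR d * (INR d * Gk k * U k))) by ring.
    apply Rmult_le_compat_l; auto. eapply Rle_trans. apply Cmod_Csumn. rewrite <- sumn_const. apply sumn_le.
    intros m Hm. rewrite Cmod_mul, Cmod_conj. apply Rmult_le_compat. apply Cmod_nonneg. apply Cmod_nonneg.
    apply (proj2 (conv_facts k m Hk Hm)). apply Cmod_le_U; auto. Qed.

Lemma cv_const (c0 : R) : Un_cv (fun _ => c0) c0.
Proof. intros e He; exists 0%nat; intros; unfold R_dist; rewrite Rminus_diag, Rabs_R0; auto. Qed.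

Definition Mtot := INR d * INR d * (Rpower 2 r * (4 * (sqrt A2 * B2 * sqrt K2))).

Lemma F_sum N : Rpsum d (fun k => INR d * INR d * (symb d r (2 * beta) k * U k * Gk k)) N <= Mtot.
Proof. change (lsum (fun k => INR d * INR d * (symb d r (2 * beta) k * U k * Gk k)) (box d N) <= Mtot).
  rewrite lsum_scal. unfold Mtot. apply Rmult_le_compat_l. pose proof HdR; nra.
  assert (Hcv : Un_cv (fun M => lsum (fun k => symb d r (2 * beta) k * U k * Rpsum d (fun j => U (ksub k j) * rho d j * U j) M) (box d N))
                 (lsum (fun k => symb d r (2 * beta) k * U k * Gk k) (box d N))).
  { apply (lsum_cv (fun k M => symb d r (2 * beta) k * U k * Rpsum d (fun j => U (ksub k j) * rho d j * U j) M)).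
    intros k Hk. apply CV_mult. apply cv_const. apply (proj1 (G_facts k (in_box_len N k Hk))). }
  eapply Rle_cv_lim; [|exact Hcv|apply cv_const]. intros M. apply main_fin. Qed.

Lemma final_sec :
  (forall k m, length k = d -> (m < d)%nat -> Chas_sum d (conv_term d u u k m)) /\
  Chas_sum d (fun k => Csumn d (fun m => Cmul (Bop d u u k m) (Cconj (Ar_exp d r beta u k m)))) /\
  Cmod (l2inner d (Bop d u u) (Ar_exp d r beta u)) <= (2 * PI) ^ d * Mtot.
Proof. split. intros k m Hk Hm; apply (proj1 (conv_facts k m Hk Hm)).
  destruct (cplx_abs_conv d Fk (fun k => INR d * INR d * (symb d r (2 * beta) k * U k * Gk k)) Mtot) as [C1 [_ C3]].
  apply F_bound. apply F_sum.
  split. exact C1.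
  unfold l2inner. change (Csum d (fun k => Csumn d (fun m => Cmul (Bop d u u k m) (Cconj (Ar_exp d r beta u k m))))) with (Csum d Fk).
  rewrite Cmod_mul, Cmod_CR, Rabs_pos_eq. apply Rmult_le_compat_l; auto.
  apply pow_le; pose proof PI_RGT_0; lra. apply pow_le; pose proof PI_RGT_0; lra. Qed.

End Main.


Theorem proposition3p2 :
  forall d : nat, (d = 2%nat \/ d = 3%nat) ->
  exists C : R, C > 0 /\
  forall (r beta : R) (u : field),
    r > (INR d + 1) / 2 ->
    beta > 0 ->
    in_HC d u ->
    Rhas_sum d (fun k => symb d (r + 1/2) (2 * beta) k * cvnorm2 d (u k)) ->
    (forall k m, length k = d -> (m < d)%nat -> Chas_sum d (conv_term d u u k m)) /\
    Chas_sum d (fun k => Csumn d (fun m =>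
        Cmul (Bop d u u k m) (Cconj (Ar_exp d r beta u k m)))) /\
    Cmod (l2inner d (Bop d u u) (Ar_exp d r beta u))
      <= C * Rpower 2 r * CW d r * gnorm d r beta 0 u * (gnorm d r beta (1/4) u) ^ 2.
Proof.
  intros d Hd. assert (Hd1 : (1 <= d)%nat) by lia.
  destruct (lattice_sum d Hd1) as [K2 [HK1 HK]].
  assert (HdR : 1 <= INR d) by (apply (le_INR 1); auto).
  assert (HPI := PI_RGT_0).
  assert (H2p : 0 < 2 ^ (d - 1)) by (apply pow_lt; lra).
  assert (HsK : 1 <= sqrt K2) by (rewrite <- sqrt_1; apply sqrt_le_1_alt; auto).
  exists (INR d * INR d * 4 * sqrt K2 * (PI * 2 ^ (d - 1))). split.
  { assert (0 < INR d * INR d) by nra. assert (0 < PI * 2 ^ (d - 1)) by nra.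
    assert (0 < INR d * INR d * 4 * sqrt K2) by nra. nra. }
  intros r beta u Hr Hbeta [Hu0 [Hdiv _]] Hb.
  destruct (final_sec d r beta u Hd1 Hr Hbeta Hu0 Hdiv Hb K2 (fun N => HK r N Hr)) as [C1 [C2 C3]].
  split; auto. split; auto. eapply Rle_trans; [exact C3|].
  assert (HA0 : 0 <= A2 d r beta u) by (eapply A2_nonneg; eauto).
  assert (HB0 : 0 <= B2 d r beta u) by (eapply B2_nonneg; eauto).
  unfold gnorm, gnorm2. replace (r + 2 * 0) with r by ring. replace (r + 2 * (1/4)) with (r + 1/2) by field.
  fold (A2 d r beta u). fold (B2 d r beta u).
  set (A := A2 d r beta u) in *. set (B := B2 d r beta u) in *.
  set (T := (2 * PI) ^ d).
  assert (HT : 1 <= T). { unfold T. apply pow_R1_Rle. pose proof PI2_1. lra. }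
  rewrite pow2_sqrt by (apply Rmult_le_pos; lra).
  assert (HsA : sqrt A <= sqrt (T * A)). { apply sqrt_le_1_alt. assert (0 <= (T - 1) * A) by (apply Rmult_le_pos; lra). lra. }
  assert (HCW : 1 / (PI * 2 ^ (d - 1)) <= CW d r).
  { unfold CW. assert (0 < 1 / (PI * 2 ^ (d - 1))) by (apply Rdiv_lt_0_compat; nra).
    assert (1 <= (2 * r - INR d) / (2 * r - 1 - INR d)).
    { apply (Rmult_le_reg_r (2 * r - 1 - INR d)). lra. unfold Rdiv. rewrite Rmult_assoc, Rinv_l by lra. lra. }
    nra. }
  set (Pp := PI * 2 ^ (d - 1)) in *. assert (HPp : 0 < Pp) by (unfold Pp; nra).
  set (R2 := Rpower 2 r). assert (HR2 : 0 < R2) by apply Rpower_pos.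
  unfold Mtot. fold A B R2.
  set (D2 := INR d * INR d). assert (HD2 : 1 <= D2) by (unfold D2; nra).
  assert (Hcw : INR d * INR d * 4 * sqrt K2 * Pp * CW d r >= D2 * 4 * sqrt K2).
  { assert (Pp * CW d r >= 1). { assert (Pp * (1/Pp) = 1) by (field; lra). assert (Pp * (1/Pp) <= Pp * CW d r) by (apply Rmult_le_compat_l; lra). lra. }
    fold D2. assert (0 <= D2 * 4 * sqrt K2) by nra. nra. }
  pose proof (sqrt_pos A). pose proof (sqrt_pos (T * A)).
  assert (E : T * (D2 * (R2 * (4 * (sqrt A * B * sqrt K2)))) = (D2 * 4 * sqrt K2) * R2 * sqrt A * (T * B)) by ring.
  fold D2. rewrite E.
  replace (INR d * INR d * 4 * sqrt K2 * Pp * R2 * CW d r * sqrt (T * A) * (T * B)) with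
    ((INR d * INR d * 4 * sqrt K2 * Pp * CW d r) * R2 * sqrt (T * A) * (T * B)) by ring.
  assert (0 <= T * B) by nra.
  apply Rmult_le_compat_r; auto. apply Rmult_le_compat; try nra.
  - apply Rmult_le_pos; [|lra]. apply Rmult_le_pos; lra.
  - fold D2 in Hcw. replace (D2 * 4 * sqrt K2 * Pp * R2 * CW d r) with ((D2 * 4 * sqrt K2 * Pp * CW d r) * R2) by ring.
    apply Rmult_le_compat_r; lra.
Qed.
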